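(* Let $N\ge1$ and let $\gamma=\frac{B}{\sum_{j=1}^N C_j}$, where $B,C_1,\dots,C_N$ are mutually independent, $B$ is $\kappa$-$\mu$ shadowed with parameters $(\kappa,\mu,m,\bar x)$ and $C_j$ is $\kappa$-$\mu$ shadowed with parameters $(\kappa_j,\mu_j,m_j,\bar x_j)$. Let $f_\gamma$ and $F_\gamma$ be the density and CDF of $\gamma$. Then $$\lim_{z\to 0^+}\frac{z\,f_\gamma(z)}{F_\gamma(z)}=\mu .$$ Equivalently, the CDF of $\hat\gamma=-\gamma$ belongs to the maximum domain of attraction of the reversed Weibull distribution $\Lambda_2(z)=\exp(-(-z)^{\mu})$ for $z\le0$ (and $1$ for $z>0$).
   Context: A random variable $X$ is $\kappa$-$\mu$ shadowed with parameters $(\kappa,\mu,m,\bar x)$ (with $\kappa\ge 0$, $\mu>0$, $m>0$, $\bar x=\mathbb E[X]>0$) if it has density $$f_X(x)=\frac{x^{\mu-1}}{\theta^{\mu-m}\lambda^{m}\Gamma(\mu)}e^{-x/\theta}\,{}_1F_1\!\left(m;\mu;\frac{x}{\theta}-\frac{x}{\lambda}\right),\quad x\ge0,$$ where ${}_1F_1$ is the confluent hypergeometric function, $\theta=\frac{\bar x}{\mu(1+\kappa)}$ and $\lambda=\frac{(\mu\kappa+m)\bar x}{\mu(1+\kappa)m}$. A CDF $F$ is in the maximum domain of attraction of a distribution $G$ if for i.i.d. samples with CDF $F$ there are constants $a_K>0$, $b_K\in\mathbb R$ with $a_K^{-1}(\max_{k\le K}z_k-b_K)$ converging in distribution to $G$.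 *)

(* Defs.v *)
From Stdlib Require Import Reals Lra ClassicalEpsilon.
Open Scope R_scope.

Fixpoint poch (a : R) (n : nat) : R :=
  match n with O => 1 | S k => poch a k * (a + INR k) end.

Definition hyp1F1_term (a b x : R) (n : nat) : R :=
  poch a n / poch b n * x ^ n / INR (Factorial.fact n).

Definition hyp1F1 (a b x : R) : R :=
  epsilon (inhabits 0) (fun l => infinite_sum (hyp1F1_term a b x) l).

(* integral of f over (0, +oo), improper at both ends *)
Definition imp_int_0inf_is (f : R -> R) (l : R) : Prop :=
  forall eps, 0 < eps -> exists d, 0 < d /\ exists M, 0 < M /\
    forall u v, 0 < u < d -> M < v -> u < v ->
      exists pr : Riemann_integrable f u v, Rabs (RiemannInt pr - l) < eps.

Definition imp_int_0inf (f : R -> R) : R :=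
  epsilon (inhabits 0) (imp_int_0inf_is f).

(* integral of f over the open interval (a, b), improper at both ends *)
Definition imp_int_ab_is (f : R -> R) (a b l : R) : Prop :=
  forall eps, 0 < eps -> exists d, 0 < d /\
    forall u v, a < u < a + d -> b - d < v < b -> u < v ->
      exists pr : Riemann_integrable f u v, Rabs (RiemannInt pr - l) < eps.

Definition imp_int_ab (f : R -> R) (a b : R) : R :=
  epsilon (inhabits 0) (imp_int_ab_is f a b).

Definition Gamma_fn (mu : R) : R :=
  imp_int_0inf (fun t => Rpower t (mu - 1) * exp (- t)).

Definition ksm_theta (k mu xb : R) : R := xb / (mu * (1 + k)).
Definition ksm_lambda (k mu m xb : R) : R :=
  (mu * k + m) * xb / (mu * (1 + k) * m).

Definition ksm_pdf (k mu m xb : R) (x : R) : R :=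
  let th := ksm_theta k mu xb in
  let la := ksm_lambda k mu m xb in
  if Rle_dec 0 x then
    (if Rlt_dec 0 x then
       Rpower x (mu - 1) / (Rpower th (mu - m) * Rpower la m * Gamma_fn mu)
       * exp (- x / th) * hyp1F1 m mu (x / th - x / la)
     else 0 (* value at the single point 0 is immaterial *))
  else 0.

Definition conv (f g : R -> R) (s : R) : R :=
  if Rlt_dec 0 s then imp_int_ab (fun t => f t * g (s - t)) 0 s else 0.

(* density of C_0 + C_1 + ... + C_n, with C_j independent of density p j *)
Fixpoint sum_pdf (p : nat -> R -> R) (n : nat) : R -> R :=
  match n with
  | O => p O
  | S n' => conv (p (S n')) (sum_pdf p n')
  end.

(* density of B / S, B and S independent nonnegative with densities fB, fS *)
Definition ratio_pdf (fB fS : R -> R) (z : R) : R :=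
  if Rlt_dec 0 z then imp_int_0inf (fun s => s * fB (z * s) * fS s) else 0.

(* CDF at z > 0 of a r.v. supported on [0,oo) with density f *)
Definition cdf_pos (f : R -> R) (z : R) : R := imp_int_ab f 0 z.

(* Main.v *)
Require Import Defs.
From Stdlib Require Import Reals Lra Lia ClassicalEpsilon.
From Coquelicot Require Import Coquelicot.
Open Scope R_scope.

Module M_P1.
Implicit Types (a : R) (b : Rbar) (f g : R -> R).

Definition IOK (f : R -> R) (a : R) (b : Rbar) :=
  forall u v, a < u -> u <= v -> Rbar_lt v b -> ex_RInt f u v.
Definition NNg (f : R -> R) (a : R) (b : Rbar) :=
  forall t, a < t -> Rbar_lt t b -> 0 <= f t.
Definition isI (f : R -> R) (a : R) (b : Rbar) (l : R) :=
  forall eps, 0 < eps -> exists u0 v0, a < u0 /\ u0 <= v0 /\ Rbar_lt v0 b /\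
    forall u v, a < u -> u <= u0 -> v0 <= v -> Rbar_lt v b ->
      Rabs (RInt f u v - l) < eps.

Lemma Chasles_R (f : R -> R) (x y z : R) :
  ex_RInt f x y -> ex_RInt f y z -> RInt f x y + RInt f y z = RInt f x z.
Proof. intros H1 H2. exact (RInt_Chasles f x y z H1 H2). Qed.

Lemma Rbar_lt_le_trans' (x y : R) (b : Rbar) : x <= y -> Rbar_lt y b -> Rbar_lt x b.
Proof. destruct b; simpl; auto; lra. Qed.

Lemma IOK_sub f a b u v u' v' : IOK f a b -> a < u -> u <= u' -> u' <= v' -> v' <= v ->
  Rbar_lt v b -> ex_RInt f u' v'.
Proof. intros H ? ? ? ? ?. apply H; try lra. eapply Rbar_lt_le_trans'; eauto. Qed.

Lemma RInt_split3 f u u0 v0 v : ex_RInt f u u0 -> ex_RInt f u0 v0 -> ex_RInt f v0 v ->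
  RInt f u v = RInt f u u0 + RInt f u0 v0 + RInt f v0 v.
Proof.
  intros H1 H2 H3. assert (H4 : ex_RInt f u v0) by (eapply ex_RInt_Chasles; eauto).
  pose proof (Chasles_R f u v0 v H4 H3). pose proof (Chasles_R f u u0 v0 H1 H2). lra.
Qed.

Lemma RInt_mono_dom f a b u v u' v' : IOK f a b -> NNg f a b ->
  a < u -> u <= u' -> u' <= v' -> v' <= v -> Rbar_lt v b ->
  RInt f u' v' <= RInt f u v.
Proof.
  intros Hi Hn ? ? ? ? Hv.
  rewrite (RInt_split3 f u u' v' v).
  2,3,4: match goal with |- ex_RInt ?f _ _ => apply (IOK_sub f a b u v); auto; lra end.
  assert (0 <= RInt f u u'). { apply RInt_ge_0; try lra. match goal with |- ex_RInt ?f _ _ => apply (IOK_sub f a b u v); auto; lra end.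
    intros; apply Hn; try lra. eapply Rbar_lt_le_trans'; [|eauto]; lra. }
  assert (0 <= RInt f v' v). { apply RInt_ge_0; try lra. match goal with |- ex_RInt ?f _ _ => apply (IOK_sub f a b u v); auto; lra end.
    intros; apply Hn; try lra. eapply Rbar_lt_le_trans'; [|eauto]; lra. }
  lra.
Qed.

Lemma RInt_diff_le f g a b u u0 v0 v : IOK f a b -> IOK g a b ->
  (forall t, a < t -> Rbar_lt t b -> f t <= g t) ->
  a < u -> u <= u0 -> u0 <= v0 -> v0 <= v -> Rbar_lt v b ->
  RInt f u v - RInt f u0 v0 <= RInt g u v - RInt g u0 v0.
Proof.
  intros Hf Hg Hle ? ? ? ? Hv.
  rewrite (RInt_split3 f u u0 v0 v) by (match goal with |- ex_RInt ?f _ _ => apply (IOK_sub f a b u v); auto; lra end).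
  rewrite (RInt_split3 g u u0 v0 v) by (match goal with |- ex_RInt ?f _ _ => apply (IOK_sub f a b u v); auto; lra end).
  assert (RInt f u u0 <= RInt g u u0).
  { apply RInt_le; try lra; try (match goal with |- ex_RInt ?f _ _ => apply (IOK_sub f a b u v); auto; lra end).
    intros; apply Hle; try lra. eapply Rbar_lt_le_trans'; [|eauto]; lra. }
  assert (RInt f v0 v <= RInt g v0 v).
  { apply RInt_le; try lra; try (match goal with |- ex_RInt ?f _ _ => apply (IOK_sub f a b u v); auto; lra end).
    intros; apply Hle; try lra. eapply Rbar_lt_le_trans'; [|eauto]; lra. }
  lra.
Qed.

Lemma inner_point (a : R) (b : Rbar) : Rbar_lt a b -> exists c, a < c /\ Rbar_lt c b.
Proof.
  destruct b as [b| |]; simpl; intros H.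
  - exists ((a+b)/2); split; lra.
  - exists (a+1); split; [lra|simpl; auto].
  - contradiction.
Qed.

Lemma sup_exists f a b B : Rbar_lt a b -> IOK f a b -> NNg f a b ->
  (forall u v, a < u -> u <= v -> Rbar_lt v b -> RInt f u v <= B) ->
  exists l, isI f a b l /\ l <= B /\ 0 <= l /\
    (forall u v, a < u -> u <= v -> Rbar_lt v b -> RInt f u v <= l).
Proof.
  intros Hab Hi Hn HB.
  set (E := fun x => exists u v, a < u /\ u <= v /\ Rbar_lt v b /\ x = RInt f u v).
  assert (Hbd : bound E). { exists B. intros x [u [v [? [? [? ->]]]]]. auto. }
  destruct (inner_point a b Hab) as [c [Hc1 Hc2]].
  assert (Hne : exists x, E x). { exists (RInt f c c). exists c, c. repeat split; auto; lra. }
  destruct (completeness E Hbd Hne) as [l [Hub Hlub]].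
  assert (Hle : forall u v, a < u -> u <= v -> Rbar_lt v b -> RInt f u v <= l).
  { intros u v ? ? ?. apply Hub. exists u, v; auto. }
  exists l. split; [|split;[|split]].
  - intros eps Heps.
    assert (exists u0 v0, a < u0 /\ u0 <= v0 /\ Rbar_lt v0 b /\ l - eps < RInt f u0 v0).
    { apply Classical_Prop.NNPP. intro Hno.
      assert (l <= l - eps); [|lra].
      apply Hlub. intros x [u [v [? [? [? ->]]]]].
      apply Rnot_lt_le. intro Hlt. apply Hno. exists u, v; auto. }
    destruct H as [u0 [v0 [? [? [? ?]]]]].
    exists u0, v0. split; [|split; [|split]]; auto.
    intros u v ? ? ? ?.
    assert (RInt f u0 v0 <= RInt f u v) by (eapply RInt_mono_dom; eauto).
    assert (RInt f u v <= l) by (apply Hle; auto; lra).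
    apply Rabs_def1; lra.
  - apply Hlub. intros x [u [v [? [? [? ->]]]]]. auto.
  - apply Rle_trans with (RInt f c c). rewrite RInt_point. unfold zero; simpl; lra.
    apply Hle; auto; lra.
  - auto.
Qed.

Lemma isI_ext f g a b l : (forall t, a < t -> Rbar_lt t b -> f t = g t) ->
  isI f a b l -> isI g a b l.
Proof.
  intros He H eps Heps. destruct (H eps Heps) as [u0 [v0 [? [? [? Hc]]]]].
  exists u0, v0. repeat split; auto. intros u v ? ? ? ?.
  rewrite <- (RInt_ext f g). apply Hc; auto.
  intros x Hx. rewrite Rmin_left in Hx by lra. rewrite Rmax_right in Hx by lra.
  apply He; try lra. eapply Rbar_lt_le_trans'; [|eauto]; lra.
Qed.

Lemma IOK_ext f g a b : (forall t, a < t -> Rbar_lt t b -> f t = g t) -> IOK f a b -> IOK g a b.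
Proof.
  intros He H u v ? ? ?. apply ex_RInt_ext with f. 2: apply H; auto.
  intros x Hx. rewrite Rmin_left in Hx by lra. rewrite Rmax_right in Hx by lra.
  apply He; try lra. eapply Rbar_lt_le_trans'; [|eauto]; lra.
Qed.

Lemma isI_scal f a b l c : IOK f a b -> isI f a b l -> isI (fun t => c * f t) a b (c * l).
Proof.
  intros Hi H eps Heps.
  destruct (H (eps / (Rabs c + 1))) as [u0 [v0 [? [? [? Hc]]]]].
  { apply Rdiv_lt_0_compat; auto. pose proof (Rabs_pos c); lra. }
  exists u0, v0. repeat split; auto. intros u v ? ? ? ?.
  assert (RInt (fun t => c * f t) u v = c * RInt f u v) as ->.
  { exact (RInt_scal f u v c (Hi u v ltac:(lra) ltac:(lra) ltac:(assumption))). }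
  replace (c * RInt f u v - c * l) with (c * (RInt f u v - l)) by ring.
  rewrite Rabs_mult. specialize (Hc u v ltac:(lra) ltac:(lra) ltac:(lra) ltac:(assumption)).
  pose proof (Rabs_pos c). pose proof (Rabs_pos (RInt f u v - l)).
  apply Rle_lt_trans with (Rabs c * (eps / (Rabs c + 1))).
  apply Rmult_le_compat_l; lra.
  assert (Rabs c * (eps / (Rabs c + 1)) = eps * (Rabs c / (Rabs c + 1))) as -> by (field; lra).
  assert (Rabs c / (Rabs c + 1) < 1). { apply Rmult_lt_reg_r with (Rabs c + 1); try lra.
    unfold Rdiv. rewrite Rmult_assoc, Rinv_l by lra. lra. }
  assert (0 <= Rabs c / (Rabs c + 1)) by (apply Rmult_le_pos; [lra| left; apply Rinv_0_lt_compat; lra]).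
  nra.
Qed.

Lemma isI_le f g a b l1 l2 : IOK f a b -> IOK g a b ->
  (forall t, a < t -> Rbar_lt t b -> f t <= g t) ->
  isI f a b l1 -> isI g a b l2 -> l1 <= l2.
Proof.
  intros Hf Hg Hle H1 H2. apply Rnot_lt_le. intro Hlt.
  destruct (H1 ((l1 - l2)/2)) as [u1 [v1 [? [? [? Hc1]]]]]; [lra|].
  destruct (H2 ((l1 - l2)/2)) as [u2 [v2 [? [? [? Hc2]]]]]; [lra|].
  set (u := Rmin u1 u2). set (v := Rmax v1 v2).
  assert (a < u) by (unfold u; apply Rmin_glb_lt; auto).
  assert (Rbar_lt v b) by (unfold v; apply Rmax_case; auto).
  assert (u <= u1) by apply Rmin_l. assert (u <= u2) by apply Rmin_r.
  assert (v1 <= v) by apply Rmax_l. assert (v2 <= v) by apply Rmax_r.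
  specialize (Hc1 u v ltac:(lra) ltac:(lra) ltac:(lra) ltac:(assumption)).
  specialize (Hc2 u v ltac:(lra) ltac:(lra) ltac:(lra) ltac:(assumption)).
  assert (RInt f u v <= RInt g u v).
  { apply RInt_le; try lra. apply Hf; auto; lra. apply Hg; auto; lra.
    intros; apply Hle; try lra. eapply Rbar_lt_le_trans'; [|eauto]; lra. }
  apply Rabs_def2 in Hc1. apply Rabs_def2 in Hc2. lra.
Qed.

Lemma isI_to_ab f a (b : R) l : IOK f a (Finite b) -> isI f a b l -> imp_int_ab_is f a b l.
Proof.
  intros Hi H eps Heps. destruct (H eps Heps) as [u0 [v0 [? [? [Hv0 Hc]]]]].
  simpl in Hv0.
  exists (Rmin (u0 - a) (b - v0)). split.
  { apply Rmin_glb_lt; lra. }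
  intros u v Hu Hv Huv.
  pose proof (Rmin_l (u0 - a) (b - v0)). pose proof (Rmin_r (u0 - a) (b - v0)).
  assert (Hex : ex_RInt f u v) by (apply Hi; simpl; lra).
  exists (ex_RInt_Reals_0 _ _ _ Hex). rewrite <- RInt_Reals.
  apply Hc; simpl; lra.
Qed.

Lemma isI_to_0inf f l : IOK f 0 p_infty -> isI f 0 p_infty l -> imp_int_0inf_is f l.
Proof.
  intros Hi H eps Heps. destruct (H eps Heps) as [u0 [v0 [? [? [Hv0 Hc]]]]].
  exists u0. split; auto. exists (Rmax v0 1). split.
  { apply Rlt_le_trans with 1; [lra| apply Rmax_r]. }
  intros u v Hu Hv Huv. pose proof (Rmax_l v0 1).
  assert (Hex : ex_RInt f u v) by (apply Hi; simpl; auto; lra).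
  exists (ex_RInt_Reals_0 _ _ _ Hex). rewrite <- RInt_Reals.
  apply Hc; simpl; auto; lra.
Qed.

Lemma eq_of_close (x y : R) : (forall eps, 0 < eps -> Rabs (x - y) < eps) -> x = y.
Proof.
  intros H. destruct (Req_dec x y) as [|Hne]; auto.
  assert (0 < Rabs (x - y)) by (apply Rabs_pos_lt; lra).
  specialize (H (Rabs (x - y)) H0). lra.
Qed.

Lemma ab_unique f a (b : R) l1 l2 : a < b -> imp_int_ab_is f a b l1 -> imp_int_ab_is f a b l2 -> l1 = l2.
Proof.
  intros Hab H1 H2. apply eq_of_close. intros eps Heps.
  destruct (H1 (eps/2)) as [d1 [Hd1 Hc1]]; [lra|].
  destruct (H2 (eps/2)) as [d2 [Hd2 Hc2]]; [lra|].
  set (d := Rmin (Rmin d1 d2) (b - a)).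
  assert (0 < d) by (unfold d; repeat apply Rmin_glb_lt; lra).
  assert (d <= d1) by (unfold d; eapply Rle_trans; [apply Rmin_l|apply Rmin_l]).
  assert (d <= d2) by (unfold d; eapply Rle_trans; [apply Rmin_l|apply Rmin_r]).
  assert (d <= b - a) by (unfold d; apply Rmin_r).
  destruct (Hc1 (a + d/3) (b - d/3)) as [p1 Hp1]; try lra.
  destruct (Hc2 (a + d/3) (b - d/3)) as [p2 Hp2]; try lra.
  rewrite (RiemannInt_P5 p1 p2) in Hp1.
  apply Rabs_def2 in Hp1. apply Rabs_def2 in Hp2. apply Rabs_def1; lra.
Qed.

Lemma inf_unique f l1 l2 : imp_int_0inf_is f l1 -> imp_int_0inf_is f l2 -> l1 = l2.
Proof.
  intros H1 H2. apply eq_of_close. intros eps Heps.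
  destruct (H1 (eps/2)) as [d1 [Hd1 [M1 [HM1 Hc1]]]]; [lra|].
  destruct (H2 (eps/2)) as [d2 [Hd2 [M2 [HM2 Hc2]]]]; [lra|].
  set (u := Rmin d1 d2 / 2). set (v := Rmax M1 M2 + u + 1).
  assert (0 < Rmin d1 d2) by (apply Rmin_glb_lt; lra).
  pose proof (Rmin_l d1 d2). pose proof (Rmin_r d1 d2).
  pose proof (Rmax_l M1 M2). pose proof (Rmax_r M1 M2).
  assert (0 < u < d1) by (unfold u; lra). assert (0 < u < d2) by (unfold u; lra).
  assert (M1 < v) by (unfold v; lra). assert (M2 < v) by (unfold v; lra).
  assert (u < v) by (unfold v; lra).
  destruct (Hc1 u v) as [p1 Hp1]; try lra.
  destruct (Hc2 u v) as [p2 Hp2]; try lra.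
  rewrite (RiemannInt_P5 p1 p2) in Hp1.
  apply Rabs_def2 in Hp1. apply Rabs_def2 in Hp2. apply Rabs_def1; lra.
Qed.

Lemma ab_value f a (b : R) l : a < b -> IOK f a (Finite b) -> isI f a b l -> imp_int_ab f a b = l.
Proof.
  intros Hab Hi H. assert (Hs : imp_int_ab_is f a b l) by (apply isI_to_ab; auto).
  unfold imp_int_ab. apply (ab_unique f a b); auto.
  apply epsilon_spec. exists l; auto.
Qed.

Lemma inf_value f l : IOK f 0 p_infty -> isI f 0 p_infty l -> imp_int_0inf f = l.
Proof.
  intros Hi H. assert (Hs : imp_int_0inf_is f l) by (apply isI_to_0inf; auto).
  unfold imp_int_0inf. apply (inf_unique f); auto.
  apply epsilon_spec. exists l; auto.
Qed.

End M_P1.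
Import M_P1.

Module M_P1b.
Implicit Types (a : R) (b : Rbar) (f g : R -> R).

Lemma RInt_minus_R f g x y : ex_RInt f x y -> ex_RInt g x y ->
  RInt (fun t => f t - g t) x y = RInt f x y - RInt g x y.
Proof. intros H1 H2. exact (RInt_minus f g x y H1 H2). Qed.

Lemma ex_RInt_minus_R f g x y : ex_RInt f x y -> ex_RInt g x y ->
  ex_RInt (fun t => f t - g t) x y.
Proof. intros H1 H2. exact (ex_RInt_minus f g x y H1 H2). Qed.

Lemma RInt_close f g x y e : x <= y -> ex_RInt f x y -> ex_RInt g x y ->
  (forall t, x <= t <= y -> Rabs (f t - g t) <= e) ->
  Rabs (RInt f x y - RInt g x y) <= (y - x) * e.
Proof.
  intros Hxy H1 H2 H. rewrite <- RInt_minus_R by auto.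
  apply abs_RInt_le_const; auto. apply ex_RInt_minus_R; auto.
Qed.

Lemma tail_close F W a b Lw L u0 v0 e :
  IOK F a b -> NNg F a b -> IOK W a b ->
  (forall t, a < t -> Rbar_lt t b -> F t <= W t) ->
  a < u0 -> u0 <= v0 -> Rbar_lt v0 b ->
  (forall u v, a < u -> u <= u0 -> v0 <= v -> Rbar_lt v b -> Rabs (RInt W u v - Lw) < e) ->
  isI F a b L ->
  Rabs (L - RInt F u0 v0) < 3 * e.
Proof.
  intros HiF HnF HiW Hle Hu0 Huv0 Hv0 HW HF.
  assert (He : 0 < e).
  { specialize (HW u0 v0 Hu0 (Rle_refl _) (Rle_refl _) Hv0). pose proof (Rabs_pos (RInt W u0 v0 - Lw)). lra. }
  destruct (HF e He) as [u1 [v1 [? [? [? Hc]]]]].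
  set (u := Rmin u0 u1). set (v := Rmax v0 v1).
  assert (a < u) by (unfold u; apply Rmin_glb_lt; auto).
  assert (Rbar_lt v b) by (unfold v; apply Rmax_case; auto).
  assert (u <= u1) by apply Rmin_r. assert (u <= u0) by apply Rmin_l.
  assert (v1 <= v) by apply Rmax_r. assert (v0 <= v) by apply Rmax_l.
  specialize (Hc u v ltac:(lra) ltac:(lra) ltac:(lra) ltac:(assumption)).
  assert (RInt F u0 v0 <= RInt F u v) by (eapply RInt_mono_dom; eauto).
  assert (RInt F u v - RInt F u0 v0 <= RInt W u v - RInt W u0 v0) by (eapply RInt_diff_le; eauto).
  pose proof (HW u v ltac:(lra) ltac:(lra) ltac:(lra) ltac:(assumption)) as HWa.
  pose proof (HW u0 v0 ltac:(lra) ltac:(lra) ltac:(lra) ltac:(assumption)) as HWb.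
  apply Rabs_def2 in Hc. apply Rabs_def2 in HWa. apply Rabs_def2 in HWb.
  apply Rabs_def1; lra.
Qed.

Lemma dct (F : R -> R -> R) W a b (Z : R -> Prop) z0 (L : R -> R) Lw :
  Z z0 ->
  (forall z, Z z -> IOK (F z) a b) -> (forall z, Z z -> NNg (F z) a b) -> IOK W a b ->
  (forall z t, Z z -> a < t -> Rbar_lt t b -> F z t <= W t) ->
  isI W a b Lw ->
  (forall z, Z z -> isI (F z) a b (L z)) ->
  (forall u v, a < u -> u <= v -> Rbar_lt v b -> forall eps, 0 < eps -> exists del, 0 < del /\
     forall z, Z z -> Rabs (z - z0) < del -> forall t, u <= t <= v -> Rabs (F z t - F z0 t) <= eps) ->
  forall eps, 0 < eps -> exists del, 0 < del /\
    forall z, Z z -> Rabs (z - z0) < del -> Rabs (L z - L z0) < eps.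
Proof.
  intros HZ0 HiF HnF HiW Hle HW HL Hunif eps Heps.
  destruct (HW (eps/8)) as [u0 [v0 [Hu0 [Huv0 [Hv0 HWc]]]]]; [lra|].
  destruct (Hunif u0 v0 Hu0 Huv0 Hv0 (eps / (8 * (v0 - u0 + 1)))) as [del [Hdel Hd]].
  { apply Rdiv_lt_0_compat; lra. }
  exists del. split; auto. intros z Hz Hzd.
  pose proof (tail_close (F z) W a b Lw (L z) u0 v0 (eps/8) (HiF z Hz) (HnF z Hz) HiW
    (fun t => Hle z t Hz) Hu0 Huv0 Hv0 HWc (HL z Hz)) as T1.
  pose proof (tail_close (F z0) W a b Lw (L z0) u0 v0 (eps/8) (HiF z0 HZ0) (HnF z0 HZ0) HiW
    (fun t => Hle z0 t HZ0) Hu0 Huv0 Hv0 HWc (HL z0 HZ0)) as T2.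
  assert (T3 : Rabs (RInt (F z) u0 v0 - RInt (F z0) u0 v0) <= (v0 - u0) * (eps / (8 * (v0 - u0 + 1)))).
  { apply RInt_close; auto. apply (HiF z Hz); auto. apply (HiF z0 HZ0); auto. }
  assert ((v0 - u0) * (eps / (8 * (v0 - u0 + 1))) <= eps / 8).
  { assert ((v0 - u0) * (eps / (8 * (v0 - u0 + 1))) = (eps/8) * ((v0 - u0) / (v0 - u0 + 1))) as -> by (field; lra).
    assert ((v0 - u0) / (v0 - u0 + 1) <= 1).
    { apply Rmult_le_reg_r with (v0 - u0 + 1); [lra|]. unfold Rdiv.
      rewrite Rmult_assoc, Rinv_l by lra. lra. }
    assert (0 <= (v0 - u0) / (v0 - u0 + 1)) by (apply Rmult_le_pos; [lra | left; apply Rinv_0_lt_compat; lra]).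
    nra. }
  apply Rabs_def2 in T1. apply Rabs_def2 in T2.
  apply Rabs_def1; pose proof (Rle_abs (RInt (F z) u0 v0 - RInt (F z0) u0 v0));
    pose proof (Rle_abs (- (RInt (F z) u0 v0 - RInt (F z0) u0 v0))); rewrite Rabs_Ropp in *; lra.
Qed.

End M_P1b.
Import M_P1b.

Module M_P2.

Lemma pw_pos x e : 0 < Rpower x e.
Proof. unfold Rpower. apply exp_pos. Qed.

Lemma pw_mult x y e : 0 < x -> 0 < y -> Rpower (x * y) e = Rpower x e * Rpower y e.
Proof. intros. rewrite Rpower_mult_distr; auto. Qed.

Lemma pw_plus x e1 e2 : Rpower x (e1 + e2) = Rpower x e1 * Rpower x e2.
Proof. apply Rpower_plus. Qed.

Lemma pw_le_base x y e : 0 <= e -> 0 < x <= y -> Rpower x e <= Rpower y e.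
Proof. intros. apply Rle_Rpower_l; auto. Qed.

Lemma pw_ge_base x y e : e <= 0 -> 0 < x <= y -> Rpower y e <= Rpower x e.
Proof.
  intros He Hxy.
  assert (E1 : Rpower y e = / Rpower y (-e)) by (rewrite <- Rpower_Ropp, Ropp_involutive; auto).
  assert (E2 : Rpower x e = / Rpower x (-e)) by (rewrite <- Rpower_Ropp, Ropp_involutive; auto).
  rewrite E1, E2. apply Rinv_le_contravar. apply pw_pos. apply pw_le_base; lra.
Qed.

Lemma pw_between x p q e : 0 < p <= x -> x <= q -> Rpower x e <= Rpower p e + Rpower q e.
Proof.
  intros Hp Hq. pose proof (pw_pos p e). pose proof (pw_pos q e).
  destruct (Rle_dec 0 e).
  - pose proof (pw_le_base x q e r ltac:(lra)). lra.
  - pose proof (pw_ge_base p x e ltac:(lra) ltac:(lra)). lra.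
Qed.

Lemma pw_le1 x e : 0 <= e -> 0 < x <= 1 -> Rpower x e <= 1.
Proof. intros.
  pose proof (pw_le_base x 1 e H H0). unfold Rpower in H1 at 2. rewrite ln_1, Rmult_0_r, exp_0 in H1. auto. Qed.

Lemma pw_ge1_neg x e : e <= 0 -> 1 <= x -> Rpower x e <= 1.
Proof. intros. pose proof (pw_ge_base 1 x e H ltac:(lra)). unfold Rpower in H1 at 2.
  rewrite ln_1, Rmult_0_r, exp_0 in H1. auto. Qed.

Lemma pw_one x : 0 < x -> Rpower x 1 = x.
Proof. intros. apply Rpower_1; auto. Qed.

Lemma pw_continuous x e : 0 < x -> continuous (fun s => Rpower s e) x.
Proof.
  intros Hx. apply (ex_derive_continuous (K:=R_AbsRing) (V:=R_NormedModule)). exists (e * Rpower x (e - 1)).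
  apply is_derive_Reals. apply derivable_pt_lim_power; auto.
Qed.

Lemma pw_derive x c : 0 < x -> is_derive (fun s => Rpower s c) x (c * Rpower x (c - 1)).
Proof. intros. apply is_derive_Reals. apply derivable_pt_lim_power; auto. Qed.

Lemma FTC_R (F f : R -> R) u v : u <= v ->
  (forall x, u <= x <= v -> is_derive F x (f x)) ->
  (forall x, u <= x <= v -> continuous f x) ->
  RInt f u v = F v - F u.
Proof.
  intros Huv Hd Hc. apply is_RInt_unique.
  apply (is_RInt_derive F f u v).
  - intros x Hx. rewrite Rmin_left, Rmax_right in Hx by lra. auto.
  - intros x Hx. rewrite Rmin_left, Rmax_right in Hx by lra. auto.
Qed.

Lemma RInt_pw u v c : 0 < u <= v -> 0 < c ->
  RInt (fun s => Rpower s (c - 1)) u v = (Rpower v c - Rpower u c) / c.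
Proof.
  intros Hu Hc.
  rewrite (FTC_R (fun s => Rpower s c / c)). change (Rpower v c / c - Rpower u c / c = (Rpower v c - Rpower u c) / c); field; lra. lra.
  - intros x Hx. pose proof (pw_derive x c ltac:(lra)).
    replace (Rpower x (c - 1)) with (/ c * (c * Rpower x (c - 1))) by (field; lra).
    unfold Rdiv. apply (is_derive_ext (fun s => / c * Rpower s c)). intros t; apply Rmult_comm.
    apply is_derive_scal. auto.
  - intros x Hx. apply pw_continuous. lra.
Qed.

Lemma ex_RInt_cont_R (f : R -> R) u v : u <= v -> (forall z, u <= z <= v -> continuous f z) -> ex_RInt f u v.
Proof.
  intros Huv H. apply (ex_RInt_continuous (V:=R_CompleteNormedModule)).
  intros z Hz. rewrite Rmin_left, Rmax_right in Hz by lra. auto.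
Qed.

Lemma ex_RInt_pw u v e : 0 < u <= v -> ex_RInt (fun s => Rpower s e) u v.
Proof.
  intros Hu. apply ex_RInt_cont_R; [lra|]. intros z Hz. apply pw_continuous; lra.
Qed.

Lemma RInt_exp u v be : u <= v -> 0 < be ->
  RInt (fun s => exp (- (be * s))) u v = (exp (- (be * u)) - exp (- (be * v))) / be.
Proof.
  intros Huv Hb.
  rewrite (FTC_R (fun s => - exp (- (be * s)) / be)). change (- exp (- (be * v)) / be - - exp (- (be * u)) / be = (exp (- (be * u)) - exp (- (be * v))) / be). field; lra. lra.
  - intros x Hx. auto_derive; auto. field. lra.
  - intros x Hx. apply (ex_derive_continuous (K:=R_AbsRing) (V:=R_NormedModule)). auto_derive. auto.
Qed.

Lemma exp_le_exp x y : x <= y -> exp x <= exp y.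
Proof. intros [H|H]. left; apply exp_increasing; auto. subst; lra. Qed.

End M_P2.
Import M_P2.

Module M_P3.

Lemma cR_mult (f g : R -> R) x : continuous f x -> continuous g x -> continuous (fun y => f y * g y) x.
Proof. intros. apply (continuous_mult (K:=R_AbsRing) f g x); auto. Qed.
Lemma cR_comp (f g : R -> R) x : continuous g x -> continuous f (g x) -> continuous (fun y => f (g y)) x.
Proof. intros. apply (continuous_comp g f x); auto. Qed.
Lemma cR_exp x : continuous exp x.
Proof. apply (ex_derive_continuous (K:=R_AbsRing) (V:=R_NormedModule)). auto_derive; auto. Qed.
Lemma cR_lin (p q : R) x : continuous (fun y => p * y + q) x.
Proof. apply (ex_derive_continuous (K:=R_AbsRing) (V:=R_NormedModule)). auto_derive; auto. Qed.
Lemma cR_const (c : R) x : continuous (fun _ : R => c) x.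
Proof. apply (continuous_const (U:=R_UniformSpace) (V:=R_UniformSpace)). Qed.
Lemma cR_ext (f g : R -> R) x : (forall y, f y = g y) -> continuous f x -> continuous g x.
Proof. intros He H. apply (continuous_ext f g x); auto. Qed.
Lemma cR_pt (f : R -> R) x : continuity_pt f x -> continuous f x.
Proof. intros H. apply continuity_pt_filterlim. auto. Qed.
Lemma pt_cR (f : R -> R) x : continuous f x -> continuity_pt f x.
Proof. intros H. apply continuity_pt_filterlim. auto. Qed.
Lemma cR_expneg (be : R) x : continuous (fun s => exp (- (be * s))) x.
Proof. apply (cR_comp exp (fun s => -(be*s))). apply (cR_ext (fun s => (-be) * s + 0)). intros; ring.
  apply cR_lin. apply cR_exp. Qed.
Lemma cR_pw e x : 0 < x -> continuous (fun s => Rpower s e) x.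
Proof. apply pw_continuous. Qed.

Definition mj (c be s : R) := Rpower s (c - 1) * exp (- (be * s)).

Lemma mj_pos c be s : 0 < mj c be s.
Proof. unfold mj. apply Rmult_lt_0_compat. apply pw_pos. apply exp_pos. Qed.

Lemma mj_cont c be s : 0 < s -> continuous (mj c be) s.
Proof. intros. unfold mj. apply cR_mult. apply cR_pw; auto. apply cR_expneg. Qed.

Lemma mj_IOK c be : IOK (mj c be) 0 p_infty.
Proof. intros u v Hu Huv _. apply ex_RInt_cont_R; auto. intros; apply mj_cont; lra. Qed.

Lemma mj_NN c be : NNg (mj c be) 0 p_infty.
Proof. intros t _ _. left; apply mj_pos. Qed.

Lemma pw_exp_bound c ga : 0 < ga -> exists K, 0 < K /\
  forall s, 1 <= s -> Rpower s (c - 1) <= K * exp (ga * s).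
Proof.
  intros Hg. destruct (Rle_dec (c - 1) 0) as [Hc|Hc].
  - exists 1. split; [lra|]. intros s Hs. pose proof (pw_ge1_neg s (c-1) Hc Hs).
    assert (1 <= exp (ga * s)). { rewrite <- exp_0. apply exp_le_exp. nra. } lra.
  - set (y := (c - 1) / ga). assert (Hy : 0 < y) by (unfold y; apply Rdiv_lt_0_compat; lra).
    exists (exp ((c - 1) * (ln y - 1))). split; [apply exp_pos|]. intros s Hs.
    assert (Hl : ln s <= ln y + s / y - 1).
    { assert (ln (s / y) <= s / y - 1).
      { pose proof (exp_ineq1_le (s / y - 1)).
        rewrite <- (ln_exp (s / y - 1)). apply ln_le. apply Rdiv_lt_0_compat; lra. lra. }
      rewrite ln_div in H by lra. lra. }
    unfold Rpower. rewrite <- exp_plus. apply exp_le_exp.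
    assert ((c - 1) * (s / y) = ga * s) by (unfold y; field; lra).
    assert ((c - 1) * ln s <= (c - 1) * (ln y + s / y - 1)) by (apply Rmult_le_compat_l; lra).
    nra.
Qed.

Lemma RInt_scal_R (f : R -> R) k x y : ex_RInt f x y -> RInt (fun t => k * f t) x y = k * RInt f x y.
Proof. intros H. exact (RInt_scal f x y k H). Qed.

Lemma split_bound f B1 B2 : IOK f 0 p_infty -> NNg f 0 p_infty ->
  (forall u v, 0 < u -> u <= v -> v <= 1 -> RInt f u v <= B1) ->
  (forall u v, 1 <= u -> u <= v -> RInt f u v <= B2) ->
  forall u v, 0 < u -> u <= v -> RInt f u v <= B1 + B2.
Proof.
  intros Hi Hn H1 H2 u v Hu Huv.
  assert (0 <= B1). { eapply Rle_trans; [|apply (H1 1 1); lra]. rewrite RInt_point. unfold zero; simpl; lra. }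
  assert (0 <= B2). { eapply Rle_trans; [|apply (H2 1 1); lra]. rewrite RInt_point. unfold zero; simpl; lra. }
  destruct (Rle_dec v 1). { pose proof (H1 u v Hu Huv r). lra. }
  destruct (Rle_dec 1 u). { pose proof (H2 u v r Huv). lra. }
  rewrite <- (Chasles_R f u 1 v). 2,3: apply Hi; simpl; auto; lra.
  pose proof (H1 u 1 Hu ltac:(lra) ltac:(lra)). pose proof (H2 1 v ltac:(lra) ltac:(lra)). lra.
Qed.

Lemma mj_BND c be : 0 < c -> 0 < be -> exists B,
  forall u v, 0 < u -> u <= v -> RInt (mj c be) u v <= B.
Proof.
  intros Hc Hb. destruct (pw_exp_bound c (be/2)) as [K [HK HKb]]; [lra|].
  exists (1 / c + K * (2 / be)). apply split_bound. apply mj_IOK. apply mj_NN.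
  - intros u v Hu Huv Hv1.
    apply Rle_trans with (RInt (fun s => Rpower s (c - 1)) u v).
    + apply RInt_le; auto. apply mj_IOK; simpl; auto. apply ex_RInt_pw; lra.
      intros x Hx. unfold mj. pose proof (pw_pos x (c-1)).
      assert (exp (- (be * x)) <= 1). { rewrite <- exp_0. apply exp_le_exp. nra. } nra.
    + rewrite RInt_pw by lra. pose proof (pw_pos u c). pose proof (pw_le1 v c ltac:(lra) ltac:(lra)).
      apply Rmult_le_compat_r. left; apply Rinv_0_lt_compat; lra. lra.
  - intros u v Hu Huv.
    assert (Hex : ex_RInt (fun s => exp (- (be / 2 * s))) u v).
    { apply ex_RInt_cont_R; auto. intros; apply cR_expneg. }
    apply Rle_trans with (RInt (fun s => K * exp (- (be / 2 * s))) u v).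
    + apply RInt_le; auto. apply mj_IOK; simpl; auto; lra.
      apply ex_RInt_cont_R; auto. intros; apply cR_mult. apply cR_const. apply cR_expneg.
      intros x Hx. unfold mj. specialize (HKb x ltac:(lra)).
      replace (K * exp (- (be / 2 * x))) with (K * exp (be / 2 * x) * exp (- (be * x))).
      apply Rmult_le_compat_r; [left; apply exp_pos| auto].
      rewrite Rmult_assoc, <- exp_plus. f_equal. f_equal. field.
    + rewrite RInt_scal_R by auto. rewrite RInt_exp by lra.
      apply Rmult_le_compat_l; [lra|].
      assert (exp (- (be / 2 * u)) <= 1). { rewrite <- exp_0. apply exp_le_exp. nra. }
      pose proof (exp_pos (- (be / 2 * v))).
      unfold Rdiv at 1. replace (2 / be) with (1 * / (be / 2)) by (field; lra).
      apply Rmult_le_compat_r. left; apply Rinv_0_lt_compat; lra. lra.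
Qed.

Lemma mj_isI c be : 0 < c -> 0 < be -> exists l, isI (mj c be) 0 p_infty l /\ 0 <= l.
Proof.
  intros Hc Hb. destruct (mj_BND c be Hc Hb) as [B HB].
  destruct (sup_exists (mj c be) 0 p_infty B) as [l [Hl [_ [Hl0 _]]]]; simpl; auto.
  apply mj_IOK. apply mj_NN. exists l; auto.
Qed.

End M_P3.
Import M_P3.

Module M_P4.

Lemma is_derive_val (f : R -> R) x l l' : is_derive f x l -> l = l' -> is_derive f x l'.
Proof. intros H ->; auto. Qed.

Lemma pw_shift_derive s x b : x < s ->
  is_derive (fun t => Rpower (s - t) b) x (- (b * Rpower (s - x) (b - 1))).
Proof.
  intros Hx.
  assert (Hg : is_derive (fun t => s - t) x (-1)) by (auto_derive; auto; ring).
  pose proof (is_derive_comp (fun y => Rpower y b) (fun t => s - t) x _ (-1)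
     (pw_derive (s - x) b ltac:(lra)) Hg) as Hd.
  eapply is_derive_val. exact Hd. unfold scal; simpl; unfold mult; simpl. ring.
Qed.

Lemma RInt_pw_shift s u v b : u <= v -> v < s -> 0 < b ->
  RInt (fun t => Rpower (s - t) (b - 1)) u v = (Rpower (s - u) b - Rpower (s - v) b) / b.
Proof.
  intros Huv Hvs Hb.
  rewrite (FTC_R (fun t => (- / b) * Rpower (s - t) b)).
  change (- / b * Rpower (s - v) b - - / b * Rpower (s - u) b = (Rpower (s - u) b - Rpower (s - v) b) / b).
  field; lra. lra.
  - intros x Hx. eapply is_derive_val. apply is_derive_scal. apply pw_shift_derive; lra.
    match goal with |- ?x = ?y => change (x = y :> R) end. field; lra.
  - intros x Hx. apply (cR_comp (fun y => Rpower y (b - 1)) (fun t => s - t)).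
    apply (cR_ext (fun t => (-1) * t + s)). intros; ring. apply cR_lin.
    apply cR_pw; lra.
Qed.

Definition Kab (a b : R) :=
  (Rpower (1/2) (b - 1) + 1) * Rpower (1/2) a / a + (Rpower (1/2) (a - 1) + 1) * Rpower (1/2) b / b.

Lemma Kab_pos a b : 0 < a -> 0 < b -> 0 < Kab a b.
Proof.
  intros. unfold Kab. pose proof (pw_pos (1/2) (b-1)). pose proof (pw_pos (1/2) a).
  pose proof (pw_pos (1/2) (a-1)). pose proof (pw_pos (1/2) b).
  assert (0 < (Rpower (1/2) (b - 1) + 1) * Rpower (1/2) a / a)
    by (apply Rdiv_lt_0_compat; [apply Rmult_lt_0_compat|]; lra).
  assert (0 < (Rpower (1/2) (a - 1) + 1) * Rpower (1/2) b / b)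
    by (apply Rdiv_lt_0_compat; [apply Rmult_lt_0_compat|]; lra).
  lra.
Qed.

Definition beta_int (a b s t : R) := Rpower t (a - 1) * Rpower (s - t) (b - 1).

Lemma beta_cont a b s t : 0 < t < s -> continuous (beta_int a b s) t.
Proof.
  intros Ht. unfold beta_int. apply cR_mult. apply cR_pw; lra.
  apply (cR_comp (fun y => Rpower y (b - 1)) (fun t => s - t)).
  apply (cR_ext (fun t => (-1) * t + s)). intros; ring. apply cR_lin. apply cR_pw; lra.
Qed.

Lemma beta_IOK a b s : IOK (beta_int a b s) 0 (Finite s).
Proof. intros u v Hu Huv Hv. simpl in Hv. apply ex_RInt_cont_R; auto. intros; apply beta_cont; lra. Qed.

Lemma beta_NN a b s : NNg (beta_int a b s) 0 (Finite s).
Proof. intros t Ht Hts. unfold beta_int. left. apply Rmult_lt_0_compat; apply pw_pos. Qed.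

Lemma beta_BND a b s u v : 0 < a -> 0 < b -> 0 < u -> u <= v -> v < s ->
  RInt (beta_int a b s) u v <= Kab a b * Rpower s (a + b - 1).
Proof.
  intros Ha Hb Hu Huv Hvs. set (h := s / 2).
  set (u' := Rmin u h). set (v' := Rmax v h).
  assert (0 < u') by (unfold u', h; apply Rmin_glb_lt; lra).
  assert (u' <= u) by apply Rmin_l. assert (u' <= h) by apply Rmin_r.
  assert (v <= v') by apply Rmax_l. assert (h <= v') by apply Rmax_r.
  assert (v' < s) by (unfold v', h; apply Rmax_lub_lt; lra).
  apply Rle_trans with (RInt (beta_int a b s) u' v').
  { apply (RInt_mono_dom _ 0 (Finite s)); auto. apply beta_IOK. apply beta_NN. }
  rewrite <- (Chasles_R _ u' h v'). 2,3: apply beta_IOK; simpl; auto; lra.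
  set (Cb := Rpower h (b - 1) + Rpower s (b - 1)).
  set (Ca := Rpower h (a - 1) + Rpower s (a - 1)).
  assert (I1 : RInt (beta_int a b s) u' h <= Cb * (Rpower h a / a)).
  { apply Rle_trans with (RInt (fun t => Cb * Rpower t (a - 1)) u' h).
    - apply RInt_le; auto. apply beta_IOK; simpl; auto; lra.
      apply ex_RInt_cont_R; auto. intros; apply cR_mult. apply cR_const. apply cR_pw; lra.
      intros x Hx. unfold beta_int, Cb. rewrite Rmult_comm. apply Rmult_le_compat_r.
      left; apply pw_pos. apply pw_between; unfold h in *; lra.
    - rewrite RInt_scal_R by (apply ex_RInt_pw; lra). rewrite RInt_pw by lra.
      apply Rmult_le_compat_l. unfold Cb; pose proof (pw_pos h (b-1)); pose proof (pw_pos s (b-1)); lra.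
      pose proof (pw_pos u' a). unfold Rdiv. apply Rmult_le_compat_r. left; apply Rinv_0_lt_compat; lra. lra. }
  assert (I2 : RInt (beta_int a b s) h v' <= Ca * (Rpower h b / b)).
  { apply Rle_trans with (RInt (fun t => Ca * Rpower (s - t) (b - 1)) h v').
    - apply RInt_le; auto. apply beta_IOK; simpl; auto; unfold h in *; lra.
      apply ex_RInt_cont_R; auto. intros; apply cR_mult. apply cR_const.
      apply (cR_comp (fun y => Rpower y (b - 1)) (fun t => s - t)).
      apply (cR_ext (fun t => (-1) * t + s)). intros; ring. apply cR_lin. apply cR_pw; lra.
      intros x Hx. unfold beta_int, Ca. apply Rmult_le_compat_r.
      left; apply pw_pos. apply pw_between; unfold h in *; lra.
    - rewrite RInt_scal_R. rewrite RInt_pw_shift by lra.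
      apply Rmult_le_compat_l. unfold Ca; pose proof (pw_pos h (a-1)); pose proof (pw_pos s (a-1)); lra.
      pose proof (pw_pos (s - v') b). replace (s - h) with h by (unfold h; field).
      unfold Rdiv. apply Rmult_le_compat_r. left; apply Rinv_0_lt_compat; lra. lra.
      apply ex_RInt_cont_R; auto. intros. apply (cR_comp (fun y => Rpower y (b - 1)) (fun t => s - t)).
      apply (cR_ext (fun t => (-1) * t + s)). intros; ring. apply cR_lin. apply cR_pw; lra. }
  assert (Hs : 0 < s) by lra.
  assert (E : Cb * (Rpower h a / a) + Ca * (Rpower h b / b) = Kab a b * Rpower s (a + b - 1)).
  { unfold Cb, Ca, Kab, h. replace (s / 2) with ((1/2) * s) by field.
    rewrite !pw_mult by lra.
    replace (a + b - 1) with ((b - 1) + a) by ring. rewrite pw_plus.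
    assert (H6 : Rpower s (a - 1) * Rpower s b = Rpower s (b - 1) * Rpower s a).
    { rewrite <- !pw_plus. f_equal. ring. }
    set (X := Rpower s (b - 1)) in *. set (Y := Rpower s a) in *.
    set (Z := Rpower s (a - 1)) in *. set (W := Rpower s b) in *.
    transitivity ((X * Y) * ((Rpower (1/2) (b - 1) + 1) * Rpower (1/2) a / a)
       + (Z * W) * ((Rpower (1/2) (a - 1) + 1) * Rpower (1/2) b / b)).
    field; lra. rewrite H6. field; lra. }
  lra.
Qed.

End M_P4.
Import M_P4.

Module M_P5.

Definition coef (m mu : R) (n : nat) := poch m n / poch mu n / INR (Factorial.fact n).

Lemma poch_pos c n : 0 < c -> 0 < poch c n.
Proof.
  intros Hc. induction n; simpl. lra. apply Rmult_lt_0_compat; auto.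
  pose proof (pos_INR n). lra.
Qed.

Lemma fact_pos n : 0 < INR (Factorial.fact n).
Proof. apply lt_0_INR. apply Factorial.lt_O_fact. Qed.

Lemma coef_pos m mu n : 0 < m -> 0 < mu -> 0 < coef m mu n.
Proof.
  intros. unfold coef. apply Rdiv_lt_0_compat. apply Rdiv_lt_0_compat; apply poch_pos; auto.
  apply fact_pos.
Qed.

Lemma term_eq m mu x n : hyp1F1_term m mu x n = coef m mu n * x ^ n.
Proof. unfold hyp1F1_term, coef. unfold Rdiv. ring. Qed.

Lemma coef_ratio m mu n : 0 < m -> 0 < mu ->
  coef m mu (S n) / coef m mu n = (m + INR n) / ((mu + INR n) * INR (S n)).
Proof.
  intros Hm Hmu. unfold coef. simpl poch.
  rewrite fact_simpl, mult_INR.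
  pose proof (poch_pos m n Hm). pose proof (poch_pos mu n Hmu). pose proof (fact_pos n).
  pose proof (pos_INR n). rewrite S_INR. field. repeat split; lra.
Qed.

Lemma coef_CV m mu : 0 < m -> 0 < mu -> CV_radius (coef m mu) = p_infty.
Proof.
  intros Hm Hmu. apply CV_radius_infinite_DAlembert.
  - intros n. pose proof (coef_pos m mu n Hm Hmu). lra.
  - set (C := Rmax 1 (m / mu)).
    apply is_lim_seq_le_le with (fun _ => 0) (fun n => C * / INR (S n)).
    + intros n. rewrite coef_ratio by auto. pose proof (pos_INR n).
      assert (HS : 0 < INR (S n)) by (rewrite S_INR; lra).
      rewrite Rabs_pos_eq by (apply Rdiv_le_0_compat; [lra| apply Rmult_lt_0_compat; lra]).
      split. apply Rdiv_le_0_compat; [lra| apply Rmult_lt_0_compat; lra].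
      assert ((m + INR n) / (mu + INR n) <= C).
      { unfold C. destruct (Rle_dec m mu).
        - apply Rle_trans with 1; [|apply Rmax_l]. apply Rmult_le_reg_r with (mu + INR n); [lra|].
          unfold Rdiv. rewrite Rmult_assoc, Rinv_l by lra. lra.
        - apply Rle_trans with (m / mu); [|apply Rmax_r].
          apply Rmult_le_reg_r with (mu + INR n); [lra|]. unfold Rdiv.
          rewrite Rmult_assoc, Rinv_l by lra. 
          apply Rmult_le_reg_r with mu; [lra|]. rewrite Rmult_1_r.
          replace (m * / mu * (mu + INR n) * mu) with (m * (mu + INR n)) by (field; lra). nra. }
      replace ((m + INR n) / ((mu + INR n) * INR (S n))) with ((m + INR n) / (mu + INR n) * / INR (S n))
        by (field; lra).
      apply Rmult_le_compat_r. left; apply Rinv_0_lt_compat; lra. auto.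
    + apply is_lim_seq_const.
    + replace (Finite 0) with (Rbar_mult C 0) by (simpl; f_equal; ring).
      apply is_lim_seq_scal_l.
      replace (Finite 0) with (Rbar_inv p_infty) by reflexivity.
      apply is_lim_seq_inv. 2: discriminate.
      apply (is_lim_seq_incr_1 INR p_infty). apply is_lim_seq_INR.
Qed.

Lemma hyp_eq m mu x : 0 < m -> 0 < mu -> hyp1F1 m mu x = PSeries (coef m mu) x.
Proof.
  intros Hm Hmu.
  assert (Hs : infinite_sum (hyp1F1_term m mu x) (PSeries (coef m mu) x)).
  { apply is_series_Reals.
    assert (Hp : is_pseries (coef m mu) x (PSeries (coef m mu) x)).
    { apply PSeries_correct. apply CV_radius_inside. rewrite coef_CV by auto. simpl; auto. }
    unfold is_pseries in Hp. eapply is_series_ext; [|exact Hp].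
    intros n. simpl. rewrite term_eq, pow_n_pow. unfold scal; simpl; unfold mult; simpl. ring. }
  unfold hyp1F1. apply (uniqueness_sum (hyp1F1_term m mu x)); auto.
  apply epsilon_spec. exists (PSeries (coef m mu) x); auto.
Qed.

Lemma hyp_cont m mu x : 0 < m -> 0 < mu -> continuous (hyp1F1 m mu) x.
Proof.
  intros Hm Hmu. apply (cR_ext (PSeries (coef m mu))). intros; rewrite hyp_eq; auto.
  apply cR_pt. apply PSeries_continuity. rewrite coef_CV by auto. simpl; auto.
Qed.

Lemma sum_lower (s : nat -> R) l c : infinite_sum s l -> (forall n, c <= sum_f_R0 s n) -> c <= l.
Proof.
  intros Hs Hc. apply Rnot_lt_le. intro Hlt.
  destruct (Hs (c - l)) as [N HN]; [lra|]. specialize (HN N (le_n N)). specialize (Hc N).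
  unfold Rdist in HN. apply Rabs_def2 in HN. lra.
Qed.

Lemma hyp_ge1 m mu y : 0 < m -> 0 < mu -> 0 <= y -> 1 <= hyp1F1 m mu y.
Proof.
  intros Hm Hmu Hy.
  assert (Hs : infinite_sum (hyp1F1_term m mu y) (hyp1F1 m mu y)).
  { unfold hyp1F1. apply epsilon_spec. exists (PSeries (coef m mu) y).
    apply is_series_Reals.
    assert (Hp : is_pseries (coef m mu) y (PSeries (coef m mu) y)).
    { apply PSeries_correct. apply CV_radius_inside. rewrite coef_CV by auto. simpl; auto. }
    unfold is_pseries in Hp. eapply is_series_ext; [|exact Hp].
    intros n. simpl. rewrite term_eq, pow_n_pow. unfold scal; simpl; unfold mult; simpl. ring. }
  apply (sum_lower _ _ 1 Hs). intros n. induction n.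
  - simpl. rewrite term_eq. unfold coef. simpl. lra.
  - simpl. rewrite term_eq. pose proof (coef_pos m mu (S n) Hm Hmu).
    pose proof (pow_le y (S n) Hy). nra.
Qed.

Fixpoint fmax (g : nat -> R) (N : nat) : R :=
  match N with O => g O | S k => Rmax (fmax g k) (g (S k)) end.

Lemma fmax_ge g N n : (n <= N)%nat -> g n <= fmax g N.
Proof.
  induction N; intros H.
  - inversion H; simpl; lra.
  - inversion H; subst. simpl. apply Rmax_r. simpl. eapply Rle_trans; [apply IHN; auto| apply Rmax_l].
Qed.

Lemma poch_ratio_bound m mu rho : 0 < m -> 0 < mu -> 1 < rho ->
  exists K, 0 < K /\ forall n, poch m n / poch mu n <= K * rho ^ n.
Proof.
  intros Hm Hmu Hr.
  set (r := fun n => poch m n / (poch mu n * rho ^ n)).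
  assert (HrS : forall n, r (S n) = r n * ((m + INR n) / ((mu + INR n) * rho))).
  { intros n. unfold r. simpl. pose proof (poch_pos m n Hm). pose proof (poch_pos mu n Hmu).
    pose proof (pos_INR n). pose proof (pow_lt rho n ltac:(lra)). field. repeat split; lra. }
  assert (Hrpos : forall n, 0 < r n).
  { intros n. unfold r. apply Rdiv_lt_0_compat. apply poch_pos; auto.
    apply Rmult_lt_0_compat. apply poch_pos; auto. apply pow_lt; lra. }
  destruct (INR_archimed 1 (m / (rho - 1))) as [N0 HN0]; [lra|].
  rewrite Rmult_1_r in HN0.
  assert (Hdec : forall k, r (N0 + k)%nat <= r N0).
  { induction k. rewrite Nat.add_0_r; lra.
    rewrite Nat.add_succ_r, HrS. pose proof (Hrpos (N0 + k)%nat).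
    assert ((m + INR (N0 + k)) / ((mu + INR (N0 + k)) * rho) <= 1).
    { rewrite plus_INR. pose proof (pos_INR k). pose proof (pos_INR N0).
      assert (m < (rho - 1) * INR N0).
      { apply Rmult_lt_reg_r with (/ (rho - 1)). apply Rinv_0_lt_compat; lra.
        replace ((rho - 1) * INR N0 * / (rho - 1)) with (INR N0) by (field; lra). auto. }
      apply Rmult_le_reg_r with ((mu + (INR N0 + INR k)) * rho). apply Rmult_lt_0_compat; lra.
      unfold Rdiv. rewrite Rmult_assoc, Rinv_l. 2: apply Rgt_not_eq; apply Rmult_lt_0_compat; lra.
      nra. }
    nra. }
  exists (fmax r N0). split.
  { eapply Rlt_le_trans; [apply (Hrpos 0%nat)| apply fmax_ge; lia]. }
  intros n. assert (r n <= fmax r N0).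
  { destruct (Nat.le_gt_cases n N0). apply fmax_ge; auto.
    replace n with (N0 + (n - N0))%nat by lia. eapply Rle_trans; [apply Hdec| apply fmax_ge; lia]. }
  assert (poch m n / poch mu n = r n * rho ^ n).
  { unfold r. pose proof (poch_pos mu n Hmu). pose proof (pow_lt rho n ltac:(lra)). field; lra. }
  rewrite H0. apply Rmult_le_compat_r. apply pow_le; lra. auto.
Qed.

Lemma exp_in_exp x : exp_in x (exp x).
Proof. unfold exp. destruct (exist_exp x); auto. Qed.

Lemma hyp_upper m mu rho : 0 < m -> 0 < mu -> 1 < rho ->
  exists K, 0 < K /\ forall y, 0 <= y -> hyp1F1 m mu y <= K * exp (rho * y).
Proof.
  intros Hm Hmu Hr. destruct (poch_ratio_bound m mu rho Hm Hmu Hr) as [K [HK Hb]].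
  exists K. split; auto. intros y Hy.
  rewrite hyp_eq by auto.
  assert (He : is_series (fun i => / INR (Factorial.fact i) * (rho * y) ^ i) (exp (rho * y))).
  { apply is_series_Reals. apply exp_in_exp. }
  rewrite <- (is_series_unique _ _ He). rewrite <- Series_scal_l.
  unfold PSeries. apply Series_le.
  - intros n. split.
    + pose proof (coef_pos m mu n Hm Hmu). pose proof (pow_le y n Hy). nra.
    + unfold coef. rewrite Rpow_mult_distr. specialize (Hb n).
      pose proof (fact_pos n). pose proof (pow_le y n Hy).
      assert (0 < / INR (Factorial.fact n)) by (apply Rinv_0_lt_compat; lra).
      replace (poch m n / poch mu n / INR (Factorial.fact n) * y ^ n)
        with ((poch m n / poch mu n) * (y ^ n * / INR (Factorial.fact n))) by (unfold Rdiv; ring).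
      replace (K * (/ INR (Factorial.fact n) * (rho ^ n * y ^ n)))
        with ((K * rho ^ n) * (y ^ n * / INR (Factorial.fact n))) by ring.
      apply Rmult_le_compat_r; auto. apply Rmult_le_pos; lra.
  - apply (ex_series_scal_l (K:=R_AbsRing) (V:=R_NormedModule)). exists (exp (rho * y)). auto.
Qed.

End M_P5.
Import M_P5.

Module M_P6.
Implicit Types (a c : R) (b : Rbar) (f g : R -> R).

Lemma ball_R (x e y : R) : ball x e y -> Rabs (y - x) < e.
Proof. intros H. exact H. Qed.
Lemma R_ball (x e y : R) : Rabs (y - x) < e -> ball x e y.
Proof. intros H. exact H. Qed.

Lemma cont_eps f x : continuous f x -> forall eps, 0 < eps ->
  exists del, 0 < del /\ forall y, Rabs (y - x) < del -> Rabs (f y - f x) < eps.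
Proof.
  intros Hc eps Heps. apply pt_cR in Hc.
  destruct (Hc eps Heps) as [del [Hd H]]. exists del. split; auto.
  intros y Hy. destruct (Req_dec y x) as [->|Hne].
  - rewrite Rminus_diag, Rabs_R0; auto.
  - apply H. split. split. exact I. auto. exact Hy.
Qed.

Lemma cont_loc_ext f g x e : 0 < e -> (forall y, Rabs (y - x) < e -> f y = g y) ->
  continuous g x -> continuous f x.
Proof.
  intros He Hfg Hg. apply (continuous_ext_loc (T:=R_UniformSpace) (U:=R_UniformSpace) f g x).
  exists (mkposreal e He). intros y Hy. symmetry. apply Hfg. apply ball_R; auto. auto.
Qed.

Lemma rbar_room c b : Rbar_lt c b -> exists e, 0 < e /\ Rbar_lt (c + e) b.
Proof.
  destruct b as [b| |]; simpl; intros H.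
  - exists ((b - c)/2). split; simpl; lra.
  - exists 1. split; [lra| simpl; auto].
  - contradiction.
Qed.

Lemma pos_somewhere f a b c : IOK f a b -> a < c -> Rbar_lt c b ->
  continuous f c -> 0 < f c -> exists u v, a < u /\ u < v /\ Rbar_lt v b /\ 0 < RInt f u v.
Proof.
  intros Hi Hac Hcb Hc Hpos.
  destruct (cont_eps f c Hc (f c / 2)) as [del [Hd Hdel]]; [lra|].
  destruct (rbar_room c b Hcb) as [e [He Hce]].
  set (d := Rmin (Rmin (del/2) ((c - a)/2)) e).
  assert (0 < d) by (unfold d; repeat apply Rmin_glb_lt; lra).
  assert (d <= del/2) by (unfold d; eapply Rle_trans; [apply Rmin_l|]; eapply Rle_trans; [apply Rmin_l|lra]).
  assert (d <= (c - a)/2) by (unfold d; eapply Rle_trans; [apply Rmin_l|apply Rmin_r]).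
  assert (d <= e) by (unfold d; apply Rmin_r).
  exists (c - d), (c + d). split; [lra|split;[lra|]]. split.
  { eapply Rbar_lt_le_trans'; [|exact Hce]. lra. }
  apply Rlt_le_trans with (RInt (fun _ => f c / 2) (c - d) (c + d)).
  - rewrite RInt_const. unfold scal; simpl; unfold mult; simpl. nra.
  - apply RInt_le. lra. apply ex_RInt_const. apply Hi; try lra. eapply Rbar_lt_le_trans'; [|exact Hce]. lra.
    intros x Hx. assert (Rabs (x - c) < del) by (apply Rabs_def1; lra).
    specialize (Hdel x H3). apply Rabs_def2 in Hdel. lra.
Qed.

Lemma Gamma_pos mu : 0 < mu -> 0 < Gamma_fn mu.
Proof.
  intros Hmu. destruct (mj_BND mu 1 Hmu ltac:(lra)) as [B HB].
  destruct (sup_exists (mj mu 1) 0 p_infty B) as [l [Hl [_ [Hl0 Hsup]]]].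
  { simpl; auto. } { apply mj_IOK. } { apply mj_NN. } { intros; apply HB; auto. }
  unfold Gamma_fn. rewrite (inf_value _ l).
  - destruct (pos_somewhere (mj mu 1) 0 p_infty 1 (mj_IOK mu 1)) as [u [v [Hu [Huv [Hv Hp]]]]].
    { lra. } { simpl; auto. } { apply mj_cont; lra. } { apply mj_pos. }
    specialize (Hsup u v Hu ltac:(lra) Hv). lra.
  - apply (IOK_ext (mj mu 1)). intros t _ _. unfold mj. f_equal. f_equal. ring. apply mj_IOK.
  - apply (isI_ext (mj mu 1)). intros t _ _. unfold mj. f_equal. f_equal. ring. auto.
Qed.

End M_P6.
Import M_P6.

Module M_P7.

Definition kD k mu m xb := Rpower (ksm_theta k mu xb) (mu - m) * Rpower (ksm_lambda k mu m xb) m * Gamma_fn mu.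
Definition kh k mu m xb x := / kD k mu m xb * exp (- x / ksm_theta k mu xb) *
  hyp1F1 m mu (x / ksm_theta k mu xb - x / ksm_lambda k mu m xb).

Definition valid k mu m xb := 0 <= k /\ 0 < mu /\ 0 < m /\ 0 < xb.

Lemma ksm_eq k mu m xb x : 0 < x -> ksm_pdf k mu m xb x = Rpower x (mu - 1) * kh k mu m xb x.
Proof.
  intros Hx. unfold ksm_pdf, kh, kD. cbv zeta.
  destruct (Rle_dec 0 x); [|lra]. destruct (Rlt_dec 0 x); [|lra]. unfold Rdiv. ring.
Qed.

Lemma th_la k mu m xb : valid k mu m xb ->
  0 < ksm_theta k mu xb /\ 0 < ksm_lambda k mu m xb /\ ksm_theta k mu xb <= ksm_lambda k mu m xb.
Proof.
  intros [Hk [Hmu [Hm Hxb]]]. unfold ksm_theta, ksm_lambda.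
  assert (0 < mu * (1 + k)) by nra. assert (0 <= mu * k) by nra.
  assert (0 < mu * k + m) by lra. assert (0 < mu * (1 + k) * m) by nra.
  split. apply Rdiv_lt_0_compat; auto. split.
  apply Rdiv_lt_0_compat. apply Rmult_lt_0_compat; lra. lra.
  apply Rmult_le_reg_r with (mu * (1 + k) * m). nra.
  replace (xb / (mu * (1 + k)) * (mu * (1 + k) * m)) with (xb * m) by (field; lra).
  replace ((mu * k + m) * xb / (mu * (1 + k) * m) * (mu * (1 + k) * m)) with ((mu * k + m) * xb)
    by (field; nra).
  nra.
Qed.

Lemma kD_pos k mu m xb : valid k mu m xb -> 0 < kD k mu m xb.
Proof.
  intros Hv. pose proof Hv as [Hk [Hmu [Hm Hxb]]]. unfold kD.
  apply Rmult_lt_0_compat. apply Rmult_lt_0_compat; apply pw_pos. apply Gamma_pos; auto.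
Qed.

Lemma kh_cont k mu m xb x : valid k mu m xb -> continuous (kh k mu m xb) x.
Proof.
  intros Hv. pose proof Hv as [Hk [Hmu [Hm Hxb]]]. unfold kh.
  set (th := ksm_theta k mu xb). set (la := ksm_lambda k mu m xb).
  apply cR_mult. apply cR_mult. apply cR_const.
  apply (cR_comp exp (fun x => - x / th)). apply (cR_ext (fun x => (- / th) * x + 0)).
  intros; unfold Rdiv; ring. apply cR_lin. apply cR_exp.
  apply (cR_comp (hyp1F1 m mu) (fun x => x / th - x / la)).
  apply (cR_ext (fun x => (/ th - / la) * x + 0)). intros; unfold Rdiv; ring. apply cR_lin.
  apply hyp_cont; auto.
Qed.

Lemma kh_pos k mu m xb x : valid k mu m xb -> 0 <= x -> 0 < kh k mu m xb x.
Proof.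
  intros Hv Hx. pose proof Hv as [Hk [Hmu [Hm Hxb]]]. destruct (th_la k mu m xb Hv) as [Ht [Hl Htl]].
  unfold kh. apply Rmult_lt_0_compat. apply Rmult_lt_0_compat.
  apply Rinv_0_lt_compat; apply kD_pos; auto. apply exp_pos.
  assert (1 <= hyp1F1 m mu (x / ksm_theta k mu xb - x / ksm_lambda k mu m xb)); [|lra].
  apply hyp_ge1; auto.
  assert (x / ksm_lambda k mu m xb <= x / ksm_theta k mu xb); [|lra].
  unfold Rdiv. apply Rmult_le_compat_l; auto. apply Rinv_le_contravar; auto.
Qed.

Lemma kh_bound k mu m xb : valid k mu m xb -> exists H be, 0 < H /\ 0 < be /\
  forall x, 0 <= x -> kh k mu m xb x <= H * exp (- (be * x)).
Proof.
  intros Hv. pose proof Hv as [Hk [Hmu [Hm Hxb]]]. destruct (th_la k mu m xb Hv) as [Ht [Hl Htl]].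
  set (th := ksm_theta k mu xb) in *. set (la := ksm_lambda k mu m xb) in *.
  set (al := / th - / la).
  assert (Hal0 : 0 <= al). { unfold al. assert (/ la <= / th) by (apply Rinv_le_contravar; auto). lra. }
  assert (Halt : al * th < 1).
  { unfold al. rewrite Rmult_minus_distr_r, Rinv_l by lra.
    assert (0 < / la * th) by (apply Rmult_lt_0_compat; auto; apply Rinv_0_lt_compat; auto). lra. }
  set (rho := 2 / (1 + al * th)).
  assert (Hat0 : 0 <= al * th) by nra.
  assert (Hrho : 1 < rho).
  { unfold rho. apply Rmult_lt_reg_r with (1 + al * th); [lra|]. unfold Rdiv.
    rewrite Rmult_assoc, Rinv_l by lra. lra. }
  destruct (hyp_upper m mu rho Hm Hmu Hrho) as [K [HK HKb]].
  set (be := / th - rho * al).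
  assert (Hbe : 0 < be).
  { unfold be, rho. replace (/ th - 2 / (1 + al * th) * al) with ((1 - al * th) / (th * (1 + al * th)))
      by (field; lra). apply Rdiv_lt_0_compat. lra. apply Rmult_lt_0_compat; lra. }
  exists (/ kD k mu m xb * K), be. split.
  { apply Rmult_lt_0_compat; auto. apply Rinv_0_lt_compat; apply kD_pos; auto. }
  split; auto. intros x Hx. unfold kh. fold th la.
  assert (Hy : x / th - x / la = al * x) by (unfold al, Rdiv; ring).
  rewrite Hy. specialize (HKb (al * x) ltac:(nra)).
  pose proof (kD_pos k mu m xb Hv). assert (0 < / kD k mu m xb) by (apply Rinv_0_lt_compat; auto).
  apply Rle_trans with (/ kD k mu m xb * exp (- x / th) * (K * exp (rho * (al * x)))).
  { apply Rmult_le_compat_l; auto. apply Rmult_le_pos; [lra | left; apply exp_pos]. }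
  replace (/ kD k mu m xb * exp (- x / th) * (K * exp (rho * (al * x))))
    with (/ kD k mu m xb * K * (exp (- x / th) * exp (rho * (al * x)))) by ring.
  rewrite <- exp_plus. right. f_equal. f_equal. unfold be, Rdiv. ring.
Qed.

Definition Good (g : R -> R) := exists a A be, 0 < a /\ 0 < A /\ 0 < be /\
  (forall s, 0 < s -> continuous g s) /\
  (forall s, 0 < s -> 0 <= g s <= A * mj a be s) /\
  (exists s0, 0 < s0 /\ 0 < g s0).

Lemma ksm_cont k mu m xb s : valid k mu m xb -> 0 < s -> continuous (ksm_pdf k mu m xb) s.
Proof.
  intros Hv Hs. apply (cont_loc_ext _ (fun x => Rpower x (mu - 1) * kh k mu m xb x) s s Hs).
  intros y Hy. apply Rabs_def2 in Hy. apply ksm_eq. lra.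
  apply cR_mult. apply cR_pw; auto. apply kh_cont; auto.
Qed.

Lemma ksm_Good k mu m xb : valid k mu m xb -> Good (ksm_pdf k mu m xb).
Proof.
  intros Hv. pose proof Hv as [Hk [Hmu [Hm Hxb]]].
  destruct (kh_bound k mu m xb Hv) as [H [be [HH [Hbe Hb]]]].
  exists mu, H, be. split; auto. split; auto. split; auto. split; [|split].
  - intros s Hs. apply ksm_cont; auto.
  - intros s Hs. rewrite ksm_eq by auto. unfold mj. pose proof (pw_pos s (mu - 1)).
    pose proof (kh_pos k mu m xb s Hv ltac:(lra)). specialize (Hb s ltac:(lra)). split. nra.
    replace (H * (Rpower s (mu - 1) * exp (- (be * s)))) with (Rpower s (mu - 1) * (H * exp (- (be * s)))) by ring.
    apply Rmult_le_compat_l; lra.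
  - exists 1. split; [lra|]. rewrite ksm_eq by lra. apply Rmult_lt_0_compat. apply pw_pos.
    apply kh_pos; auto; lra.
Qed.

End M_P7.
Import M_P7.

Module M_P8.
Implicit Types (f g : R -> R).

Lemma eps_cont f x : (forall eps, 0 < eps -> exists del, 0 < del /\
  forall y, Rabs (y - x) < del -> Rabs (f y - f x) < eps) -> continuous f x.
Proof.
  intros H. apply cR_pt. intros eps Heps. destruct (H eps Heps) as [del [Hd Hc]].
  exists del. split; auto. intros y [_ Hy]. apply Hc. exact Hy.
Qed.

Lemma unif_cont f lo hi : 0 < lo -> (forall x, 0 < x -> continuous f x) ->
  forall eps, 0 < eps -> exists del, 0 < del /\ forall x y, lo <= x <= hi -> lo <= y <= hi ->
    Rabs (x - y) < del -> Rabs (f x - f y) < eps.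
Proof.
  intros Hlo Hc eps Heps.
  assert (Hu : uniform_continuity f (fun c => lo <= c <= hi)).
  { apply Heine. apply compact_P3. intros x Hx. apply pt_cR. apply Hc. lra. }
  destruct (Hu (mkposreal eps Heps)) as [del Hd]. exists del. split. apply cond_pos.
  intros. apply Hd; auto.
Qed.

Lemma mj_mono_be c be be' s : 0 < s -> be' <= be -> mj c be s <= mj c be' s.
Proof.
  intros Hs Hb. unfold mj. apply Rmult_le_compat_l. left; apply pw_pos.
  apply exp_le_exp. nra.
Qed.

Lemma mj_le_pw c be s : 0 < s -> 0 < be -> mj c be s <= Rpower s (c - 1).
Proof.
  intros Hs Hb. unfold mj. pose proof (pw_pos s (c-1)).
  assert (exp (- (be * s)) <= 1) by (rewrite <- exp_0; apply exp_le_exp; nra). nra.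
Qed.

Lemma Good_weaken g a A be be' : 0 < be' -> be' <= be ->
  (forall s, 0 < s -> 0 <= g s <= A * mj a be s) -> 0 < A ->
  (forall s, 0 < s -> 0 <= g s <= A * mj a be' s).
Proof.
  intros Hb' Hb H HA s Hs. specialize (H s Hs). pose proof (mj_mono_be a be be' s Hs Hb). nra.
Qed.

Lemma cont_shift g (p q : R) t : (forall x, 0 < x -> continuous g x) -> 0 < p * t + q ->
  continuous (fun u => g (p * u + q)) t.
Proof. intros Hg Hp. apply (cR_comp g (fun u => p * u + q)). apply cR_lin. apply Hg; auto. Qed.

Section ConvGood.
Variables (f g : R -> R) (a A b B be : R).
Hypotheses (Ha : 0 < a) (HA : 0 < A) (Hb : 0 < b) (HB : 0 < B) (Hbe : 0 < be)
  (Hfc : forall s, 0 < s -> continuous f s) (Hgc : forall s, 0 < s -> continuous g s)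
  (Hfb : forall s, 0 < s -> 0 <= f s <= A * mj a be s)
  (Hgb : forall s, 0 < s -> 0 <= g s <= B * mj b be s).

Definition Is (s t : R) := f t * g (s - t).

Lemma Is_cont s t : 0 < t < s -> continuous (Is s) t.
Proof.
  intros Ht. unfold Is. apply cR_mult. apply Hfc; lra.
  apply (cR_ext (fun u => g (-1 * u + s))). intros; f_equal; ring.
  apply (cont_shift g (-1) s t Hgc). lra.
Qed.

Lemma Is_IOK s : IOK (Is s) 0 (Finite s).
Proof. intros u v Hu Huv Hv. simpl in Hv. apply ex_RInt_cont_R; auto. intros; apply Is_cont; lra. Qed.

Lemma Is_NN s : NNg (Is s) 0 (Finite s).
Proof.
  intros t Ht Hts. simpl in Hts. unfold Is. destruct (Hfb t Ht). destruct (Hgb (s - t)); [lra|].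
  apply Rmult_le_pos; auto.
Qed.

Lemma Is_le s t : 0 < t < s -> Is s t <= (A * B * exp (- (be * s))) * beta_int a b s t.
Proof.
  intros Ht. unfold Is, beta_int. destruct (Hfb t) as [H1 H2]; [lra|].
  destruct (Hgb (s - t)) as [H3 H4]; [lra|].
  apply Rle_trans with ((A * mj a be t) * (B * mj b be (s - t))).
  apply Rmult_le_compat; auto.
  unfold mj. right. replace (- (be * s)) with (- (be * t) + - (be * (s - t))) by ring.
  rewrite exp_plus. ring.
Qed.

Definition Cc := A * B * Kab a b.

Lemma Is_BND s u v : 0 < u -> u <= v -> v < s -> RInt (Is s) u v <= Cc * mj (a + b) be s.
Proof.
  intros Hu Huv Hv.
  apply Rle_trans with (RInt (fun t => (A * B * exp (- (be * s))) * beta_int a b s t) u v).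
  { apply RInt_le; auto. apply Is_IOK; simpl; auto.
    apply ex_RInt_cont_R; auto. intros; apply cR_mult. apply cR_const. apply beta_cont; lra.
    intros; apply Is_le; lra. }
  rewrite RInt_scal_R by (apply beta_IOK; simpl; auto).
  pose proof (beta_BND a b s u v Ha Hb Hu Huv Hv).
  assert (0 < A * B * exp (- (be * s))) by (apply Rmult_lt_0_compat; [nra| apply exp_pos]).
  apply Rle_trans with (A * B * exp (- (be * s)) * (Kab a b * Rpower s (a + b - 1))).
  apply Rmult_le_compat_l; lra.
  unfold Cc, mj. right. ring.
Qed.

Lemma conv_isI s : 0 < s -> exists l, isI (Is s) 0 s l /\ 0 <= l /\ l <= Cc * mj (a + b) be s /\
  (forall u v, 0 < u -> u <= v -> v < s -> RInt (Is s) u v <= l) /\ conv f g s = l.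
Proof.
  intros Hs.
  destruct (sup_exists (Is s) 0 (Finite s) (Cc * mj (a + b) be s)) as [l [Hl [Hlb [Hl0 Hsup]]]].
  { simpl; auto. } { apply Is_IOK. } { apply Is_NN. }
  { intros u v Hu Huv Hv. simpl in Hv. apply Is_BND; auto. }
  exists l. split; auto. split; auto. split; auto. split.
  { intros u v Hu Huv Hv. apply Hsup; simpl; auto. }
  unfold conv. destruct (Rlt_dec 0 s); [|lra]. apply ab_value; auto. apply Is_IOK.
Qed.

Lemma conv_bounds s : 0 < s -> 0 <= conv f g s <= Cc * mj (a + b) be s.
Proof. intros Hs. destruct (conv_isI s Hs) as [l [_ [H0 [H1 [_ ->]]]]]. auto. Qed.

Lemma conv_pos s1 s2 : 0 < s1 -> 0 < s2 -> 0 < f s1 -> 0 < g s2 -> 0 < conv f g (s1 + s2).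
Proof.
  intros H1 H2 Hf Hg. destruct (conv_isI (s1 + s2)) as [l [_ [_ [_ [Hsup ->]]]]]; [lra|].
  destruct (pos_somewhere (Is (s1 + s2)) 0 (Finite (s1 + s2)) s1 (Is_IOK (s1 + s2)))
    as [u [v [Hu [Huv [Hv Hp]]]]]; auto.
  { simpl; lra. } { apply Is_cont; lra. }
  { unfold Is. replace (s1 + s2 - s1) with s2 by ring. apply Rmult_lt_0_compat; auto. }
  simpl in Hv. specialize (Hsup u v Hu ltac:(lra) Hv). lra.
Qed.

Definition Phi (s u : R) := s * Is s (s * u).

Lemma Phi_cont s u : 0 < s -> 0 < u < 1 -> continuous (Phi s) u.
Proof.
  intros Hs Hu. unfold Phi. apply cR_mult. apply cR_const.
  apply (cR_comp (Is s) (fun u => s * u)). apply (cR_ext (fun u => s * u + 0)). intros; ring.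
  apply cR_lin. apply Is_cont. split; nra.
Qed.

Lemma Phi_IOK s : 0 < s -> IOK (Phi s) 0 (Finite 1).
Proof. intros Hs u v Hu Huv Hv. simpl in Hv. apply ex_RInt_cont_R; auto. intros; apply Phi_cont; lra. Qed.

Lemma Phi_NN s : 0 < s -> NNg (Phi s) 0 (Finite 1).
Proof.
  intros Hs t Ht Ht1. simpl in Ht1. unfold Phi. apply Rmult_le_pos; [lra|].
  apply (Is_NN s); simpl; nra.
Qed.

Lemma Phi_isI s : 0 < s -> isI (Phi s) 0 (Finite 1) (conv f g s).
Proof.
  intros Hs. destruct (conv_isI s Hs) as [l [Hl [_ [_ [_ ->]]]]].
  intros eps Heps. destruct (Hl eps Heps) as [u0 [v0 [Hu0 [Huv0 [Hv0 Hc]]]]]. simpl in Hv0.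
  exists (u0 / s), (v0 / s). split. apply Rdiv_lt_0_compat; auto.
  split. unfold Rdiv; apply Rmult_le_compat_r; [left; apply Rinv_0_lt_compat|]; lra.
  split. simpl. apply Rmult_lt_reg_r with s; auto. unfold Rdiv. rewrite Rmult_assoc, Rinv_l; lra.
  intros p q Hp Hpu Hqv Hq. simpl in Hq.
  assert (Hsp : s * p <= u0). { apply Rmult_le_reg_r with (/ s). apply Rinv_0_lt_compat; auto.
    replace (s * p * / s) with p by (field; lra). auto. }
  assert (Hsq : v0 <= s * q). { apply Rmult_le_reg_r with (/ s). apply Rinv_0_lt_compat; auto.
    replace (s * q * / s) with q by (field; lra). auto. }
  assert (E : RInt (Phi s) p q = RInt (Is s) (s * p) (s * q)).
  { assert (Hex : ex_RInt (Is s) (s * p + 0) (s * q + 0)).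
    { rewrite !Rplus_0_r. apply Is_IOK; simpl; nra. }
    pose proof (RInt_comp_lin (Is s) s 0 p q Hex) as H. rewrite !Rplus_0_r in H.
    rewrite <- H. apply RInt_ext. intros x _. unfold Phi. rewrite Rplus_0_r. reflexivity. }
  rewrite E. apply Hc; simpl; nra.
Qed.

Lemma Phi_le s u : 0 < s -> 0 < u < 1 ->
  Phi s u <= A * B * Rpower s (a + b - 1) * beta_int a b 1 u.
Proof.
  intros Hs Hu. unfold Phi.
  assert (H1 : Is s (s * u) <= (A * B * exp (- (be * s))) * beta_int a b s (s * u)) by (apply Is_le; split; nra).
  assert (H2 : exp (- (be * s)) <= 1) by (rewrite <- exp_0; apply exp_le_exp; nra).
  assert (H3 : 0 < beta_int a b s (s * u)) by (unfold beta_int; apply Rmult_lt_0_compat; apply pw_pos).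
  assert (H4 : s * beta_int a b s (s * u) = Rpower s (a + b - 1) * beta_int a b 1 u).
  { unfold beta_int. replace (s - s * u) with (s * (1 - u)) by ring.
    rewrite !pw_mult by lra. replace (a + b - 1) with (1 + (a - 1) + (b - 1)) by ring.
    rewrite !pw_plus, pw_one by lra. ring. }
  apply Rle_trans with (s * ((A * B * exp (- (be * s))) * beta_int a b s (s * u))).
  apply Rmult_le_compat_l; lra.
  apply Rle_trans with (A * B * (s * beta_int a b s (s * u))).
  { replace (s * (A * B * exp (- (be * s)) * beta_int a b s (s * u)))
      with (A * B * (s * beta_int a b s (s * u)) * exp (- (be * s))) by ring.
    assert (0 < A * B * (s * beta_int a b s (s * u))) by (apply Rmult_lt_0_compat; nra).
    nra. }
  rewrite H4. right; ring.
Qed.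

Lemma three_terms (ds d1 d2 f1 g1 f0 s0 Mf Mg E : R) : 0 <= f1 <= Mf -> 0 <= g1 <= Mg ->
  0 <= f0 <= Mf -> 0 < s0 -> Rabs ds <= E -> Rabs d1 <= E -> Rabs d2 <= E ->
  Rabs (ds * f1 * g1 + s0 * d1 * g1 + s0 * f0 * d2) <= E * (Mf * Mg + s0 * Mg + s0 * Mf).
Proof.
  intros. eapply Rle_trans. apply Rabs_triang. eapply Rle_trans.
  apply Rplus_le_compat_r. apply Rabs_triang. rewrite !Rabs_mult.
  rewrite (Rabs_pos_eq f1), (Rabs_pos_eq g1), (Rabs_pos_eq f0), (Rabs_pos_eq s0) by lra.
  pose proof (Rabs_pos ds). pose proof (Rabs_pos d1). pose proof (Rabs_pos d2).
  assert (Rabs ds * f1 * g1 <= E * Mf * Mg).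
  { apply Rmult_le_compat; [nra|lra| apply Rmult_le_compat; lra |lra]. }
  assert (s0 * Rabs d1 * g1 <= s0 * E * Mg).
  { apply Rmult_le_compat; [nra|lra| apply Rmult_le_compat; lra |lra]. }
  assert (s0 * f0 * Rabs d2 <= s0 * Mf * E).
  { apply Rmult_le_compat; [nra|lra| apply Rmult_le_compat; lra |lra]. }
  nra.
Qed.

Lemma f_on_compact (h : R -> R) c C be0 lo hi : 0 < lo -> 0 < C -> 0 < be0 ->
  (forall s, 0 < s -> 0 <= h s <= C * mj c be0 s) ->
  forall x, lo <= x <= hi -> 0 <= h x <= C * (Rpower lo (c - 1) + Rpower hi (c - 1)).
Proof.
  intros Hlo HC Hbe0 Hh x Hx. destruct (Hh x) as [H1 H2]; [lra|]. split; auto.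
  eapply Rle_trans; [exact H2|]. apply Rmult_le_compat_l; [lra|].
  eapply Rle_trans. apply mj_le_pw; lra. apply pw_between; lra.
Qed.

Lemma Phi_unif s0 : 0 < s0 -> forall p q, 0 < p -> p <= q -> q < 1 -> forall eps, 0 < eps ->
  exists del, 0 < del /\ forall s, s0 / 2 < s < 2 * s0 -> Rabs (s - s0) < del ->
  forall u, p <= u <= q -> Rabs (Phi s u - Phi s0 u) <= eps.
Proof.
  intros Hs0 p q Hp Hpq Hq eps Heps.
  set (lo := Rmin (s0 * p / 2) (s0 * (1 - q) / 2)). set (hi := 2 * s0).
  assert (Hhi : hi = 2 * s0) by reflexivity.
  assert (Hlo : 0 < lo) by (unfold lo; apply Rmin_glb_lt; nra).
  assert (Hlo1 : lo <= s0 * p / 2) by apply Rmin_l.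
  assert (Hlo2 : lo <= s0 * (1 - q) / 2) by apply Rmin_r.
  set (Mf := A * (Rpower lo (a - 1) + Rpower hi (a - 1))).
  set (Mg := B * (Rpower lo (b - 1) + Rpower hi (b - 1))).
  assert (HMf : 0 < Mf) by (unfold Mf; pose proof (pw_pos lo (a-1)); pose proof (pw_pos hi (a-1)); nra).
  assert (HMg : 0 < Mg) by (unfold Mg; pose proof (pw_pos lo (b-1)); pose proof (pw_pos hi (b-1)); nra).
  set (S := Mf * Mg + s0 * Mg + s0 * Mf).
  assert (HS : 0 < S) by (unfold S; nra).
  set (E := eps / (S + 1)).
  assert (HE : 0 < E) by (unfold E; apply Rdiv_lt_0_compat; lra).
  assert (HES : E * S <= eps).
  { unfold E. replace (eps / (S + 1) * S) with (eps * (S / (S + 1))) by (field; lra).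
    assert (S / (S + 1) <= 1). { apply Rmult_le_reg_r with (S + 1); [lra|]. unfold Rdiv.
      rewrite Rmult_assoc, Rinv_l by lra. lra. }
    assert (0 <= S / (S + 1)) by (apply Rmult_le_pos; [lra| left; apply Rinv_0_lt_compat; lra]). nra. }
  destruct (unif_cont f lo hi Hlo Hfc E HE) as [df [Hdf Hf]].
  destruct (unif_cont g lo hi Hlo Hgc E HE) as [dg [Hdg Hg]].
  exists (Rmin (Rmin df dg) E). split. { repeat apply Rmin_glb_lt; auto. }
  intros s Hs Hsd u Hu.
  assert (Hd1 : Rabs (s - s0) < df) by (eapply Rlt_le_trans; [exact Hsd|]; eapply Rle_trans; [apply Rmin_l|apply Rmin_l]).
  assert (Hd2 : Rabs (s - s0) < dg) by (eapply Rlt_le_trans; [exact Hsd|]; eapply Rle_trans; [apply Rmin_l|apply Rmin_r]).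
  assert (Hd3 : Rabs (s - s0) < E) by (eapply Rlt_le_trans; [exact Hsd|]; apply Rmin_r).
  assert (P1 : 0 <= (s - s0/2) * u) by (apply Rmult_le_pos; lra).
  assert (P2 : 0 <= s0/2 * (u - p)) by (apply Rmult_le_pos; lra).
  assert (P3 : 0 <= s * (1 - u)) by (apply Rmult_le_pos; lra).
  assert (P4 : 0 <= s0 * (1 - u)) by (apply Rmult_le_pos; lra).
  assert (P5 : 0 <= s0 * (u - p)) by (apply Rmult_le_pos; lra).
  assert (P6 : 0 <= (s - s0/2) * (1 - u)) by (apply Rmult_le_pos; lra).
  assert (P7 : 0 <= s0/2 * (q - u)) by (apply Rmult_le_pos; lra).
  assert (P8 : 0 <= s * u) by (apply Rmult_le_pos; lra).
  assert (P9 : 0 <= s0 * u) by (apply Rmult_le_pos; lra).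
  assert (Hx1 : lo <= s * u <= hi) by (split; lra).
  assert (Hx0 : lo <= s0 * u <= hi) by (split; lra).
  assert (Hy1 : lo <= s - s * u <= hi) by (split; lra).
  assert (Hy0 : lo <= s0 - s0 * u <= hi) by (split; lra).
  assert (Hux : Rabs (s * u - s0 * u) < df).
  { replace (s * u - s0 * u) with ((s - s0) * u) by ring. rewrite Rabs_mult, (Rabs_pos_eq u) by lra.
    pose proof (Rabs_pos (s - s0)). nra. }
  assert (Huy : Rabs ((s - s * u) - (s0 - s0 * u)) < dg).
  { replace ((s - s * u) - (s0 - s0 * u)) with ((s - s0) * (1 - u)) by ring.
    rewrite Rabs_mult, (Rabs_pos_eq (1 - u)) by lra. pose proof (Rabs_pos (s - s0)). nra. }
  specialize (Hf _ _ Hx1 Hx0 Hux). specialize (Hg _ _ Hy1 Hy0 Huy).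
  pose proof (f_on_compact f a A be lo hi Hlo HA Hbe Hfb (s * u) Hx1) as Bf1.
  pose proof (f_on_compact f a A be lo hi Hlo HA Hbe Hfb (s0 * u) Hx0) as Bf0.
  pose proof (f_on_compact g b B be lo hi Hlo HB Hbe Hgb (s - s * u) Hy1) as Bg1.
  fold Mf in Bf1, Bf0. fold Mg in Bg1.
  unfold Phi, Is.
  replace (s * (f (s * u) * g (s - s * u)) - s0 * (f (s0 * u) * g (s0 - s0 * u)))
    with ((s - s0) * f (s * u) * g (s - s * u) + s0 * (f (s * u) - f (s0 * u)) * g (s - s * u)
          + s0 * f (s0 * u) * (g (s - s * u) - g (s0 - s0 * u))) by ring.
  apply Rle_trans with (E * S); auto.
  apply (three_terms _ _ _ _ _ _ s0 Mf Mg E); lra.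
Qed.

Lemma conv_cont s0 : 0 < s0 -> continuous (conv f g) s0.
Proof.
  intros Hs0.
  destruct (sup_exists (beta_int a b 1) 0 (Finite 1) (Kab a b * Rpower 1 (a + b - 1)))
    as [lb [Hlb _]].
  { simpl; lra. } { apply beta_IOK. } { apply beta_NN. }
  { intros u v Hu Huv Hv. simpl in Hv. apply beta_BND; auto. }
  set (Cw := A * B * (Rpower (s0 / 2) (a + b - 1) + Rpower (2 * s0) (a + b - 1))).
  set (Z := fun s => s0 / 2 < s < 2 * s0).
  assert (HZ : forall s, Z s -> 0 < s) by (unfold Z; intros; lra).
  pose proof (dct Phi (fun u => Cw * beta_int a b 1 u) 0 (Finite 1) Z s0 (conv f g) (Cw * lb))
    as Hd.
  apply eps_cont. intros eps Heps.
  destruct Hd with (eps := eps) as [del [Hdel Hc]]; auto.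
  - unfold Z; lra.
  - intros; apply Phi_IOK; auto.
  - intros; apply Phi_NN; auto.
  - intros u v Hu Huv Hv. apply ex_RInt_cont_R; auto. intros; apply cR_mult. apply cR_const.
    simpl in Hv. apply beta_cont; lra.
  - intros z t Hz Ht Ht1. simpl in Ht1. eapply Rle_trans. apply Phi_le; auto.
    unfold Cw. pose proof (pw_between z (s0/2) (2 * s0) (a + b - 1)).
    assert (0 < beta_int a b 1 t) by (unfold beta_int; apply Rmult_lt_0_compat; apply pw_pos).
    unfold Z in Hz. assert (Rpower z (a + b - 1) <= Rpower (s0 / 2) (a + b - 1) + Rpower (2 * s0) (a + b - 1)) by (apply H; lra).
    apply Rmult_le_compat_r; [lra|]. apply Rmult_le_compat_l; nra.
  - apply isI_scal; auto. apply beta_IOK.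
  - intros; apply Phi_isI; auto.
  - intros u v Hu Huv Hv eps' Heps'. simpl in Hv.
    destruct (Phi_unif s0 Hs0 u v Hu Huv Hv eps' Heps') as [d [Hd0 Hd']].
    exists d. split. exact Hd0. intros z Hz Hzd t Ht. apply Hd'; auto.
  - exists (Rmin del (s0 / 2)). split. apply Rmin_glb_lt; lra.
    intros y Hy. apply Hc. unfold Z. pose proof (Rmin_r del (s0/2)). apply Rabs_def2 in Hy. lra.
    eapply Rlt_le_trans; [exact Hy| apply Rmin_l].
Qed.

End ConvGood.

Lemma conv_Good f g : Good f -> Good g -> Good (conv f g).
Proof.
  intros [a [A [be1 [Ha [HA [Hb1 [Hfc [Hfb [s1 [Hs1 Hf1]]]]]]]]]]
         [b [B [be2 [Hb [HB [Hb2 [Hgc [Hgb [s2 [Hs2 Hg2]]]]]]]]]].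
  set (be := Rmin be1 be2).
  assert (Hbe : 0 < be) by (apply Rmin_glb_lt; auto).
  assert (Hfb' := Good_weaken f a A be1 be Hbe (Rmin_l _ _) Hfb HA).
  assert (Hgb' := Good_weaken g b B be2 be Hbe (Rmin_r _ _) Hgb HB).
  exists (a + b), (Cc a A b B), be. split; [lra|]. split.
  { unfold Cc. pose proof (Kab_pos a b Ha Hb). apply Rmult_lt_0_compat; [apply Rmult_lt_0_compat|]; lra. }
  split; auto. split; [|split].
  - intros s Hs. apply (conv_cont f g a A b B be); auto.
  - intros s Hs. apply (conv_bounds f g a A b B be); auto.
  - exists (s1 + s2). split; [lra|]. apply (conv_pos f g a A b B be); auto.
Qed.


End M_P8.
Import M_P8.

Module M_P9.
Implicit Types (f g : R -> R).

Lemma unif_cont_gen f lo hi : (forall x, lo <= x <= hi -> continuous f x) ->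
  forall eps, 0 < eps -> exists del, 0 < del /\ forall x y, lo <= x <= hi -> lo <= y <= hi ->
    Rabs (x - y) < del -> Rabs (f x - f y) < eps.
Proof.
  intros Hc eps Heps.
  assert (Hu : uniform_continuity f (fun c => lo <= c <= hi)).
  { apply Heine. apply compact_P3. intros x Hx. apply pt_cR. apply Hc. lra. }
  destruct (Hu (mkposreal eps Heps)) as [del Hd]. exists del. split. apply cond_pos.
  intros. apply Hd; auto.
Qed.

Lemma isI_pw z mu : 0 < z -> 0 < mu ->
  isI (fun t => Rpower t (mu - 1)) 0 (Finite z) (Rpower z mu / mu).
Proof.
  intros Hz Hmu eps Heps.
  set (eta := eps * mu / 2). assert (Heta : 0 < eta) by (unfold eta; nra).
  destruct (cont_eps (fun y => Rpower y mu) z (pw_continuous z mu Hz) eta Heta) as [del [Hdel Hc]].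
  set (u0 := Rmin (Rpower eta (1 / mu)) (z / 2)).
  assert (Hu0 : 0 < u0) by (unfold u0; apply Rmin_glb_lt; [apply pw_pos|lra]).
  assert (Hu0z : u0 <= z / 2) by apply Rmin_r.
  assert (Hpu0 : Rpower u0 mu <= eta).
  { eapply Rle_trans. apply pw_le_base. lra. split; [auto|apply Rmin_l].
    rewrite Rpower_mult. replace (1 / mu * mu) with 1 by (field; lra). rewrite pw_one; lra. }
  set (v0 := Rmax (z - del / 2) (z / 2)).
  assert (Hv0a : z - del / 2 <= v0) by apply Rmax_l. assert (Hv0b : z / 2 <= v0) by apply Rmax_r.
  assert (Hv0z : v0 < z) by (unfold v0; apply Rmax_lub_lt; lra).
  exists u0, v0. split; auto. split; [lra|]. split; [simpl; auto|].
  intros u v Hu Huu Hvv Hv. simpl in Hv.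
  rewrite RInt_pw by lra.
  assert (Hpu : Rpower u mu <= eta) by (apply Rle_trans with (Rpower u0 mu); [apply pw_le_base; lra| auto]).
  pose proof (pw_pos u mu).
  assert (Hpv : Rabs (Rpower v mu - Rpower z mu) < eta) by (apply Hc; apply Rabs_def1; lra).
  replace ((Rpower v mu - Rpower u mu) / mu - Rpower z mu / mu)
    with (((Rpower v mu - Rpower z mu) - Rpower u mu) / mu) by (field; lra).
  unfold Rdiv. rewrite Rabs_mult, (Rabs_pos_eq (/ mu)) by (left; apply Rinv_0_lt_compat; lra).
  apply Rmult_lt_reg_r with mu; auto. rewrite Rmult_assoc, Rinv_l, Rmult_1_r by lra.
  apply Rabs_def2 in Hpv. apply Rabs_def1; unfold eta in *; lra.
Qed.

Section Ratio.
Variables (k mu m xb : R) (fS : R -> R) (a A be H s0 : R).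
Hypotheses (Hv : valid k mu m xb) (Ha : 0 < a) (HA : 0 < A) (Hbe : 0 < be) (HH : 0 < H)
  (HfSc : forall s, 0 < s -> continuous fS s)
  (HfSb : forall s, 0 < s -> 0 <= fS s <= A * mj a be s)
  (Hs0 : 0 < s0) (HfS0 : 0 < fS s0)
  (Hhb : forall x, 0 <= x -> kh k mu m xb x <= H).

Let h := kh k mu m xb.
Let Hmu : 0 < mu. Proof. destruct Hv as [_ [Hmu _]]; auto. Qed.

Definition Psi z s := Rpower s mu * h (z * s) * fS s.
Definition Wf s := H * A * mj (mu + a) be s.

Lemma Psi_cont z s : 0 < s -> continuous (Psi z) s.
Proof.
  intros Hs. unfold Psi. apply cR_mult. apply cR_mult. apply cR_pw; auto.
  apply (cR_comp h (fun s => z * s)). apply (cR_ext (fun s => z * s + 0)). intros; ring.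
  apply cR_lin. apply kh_cont; auto. apply HfSc; auto.
Qed.

Lemma Psi_IOK z : IOK (Psi z) 0 p_infty.
Proof. intros u v Hu Huv _. apply ex_RInt_cont_R; auto. intros; apply Psi_cont; lra. Qed.

Lemma Psi_NN z : 0 <= z -> NNg (Psi z) 0 p_infty.
Proof.
  intros Hz t Ht _. unfold Psi. pose proof (pw_pos t mu). pose proof (kh_pos k mu m xb (z * t) Hv ltac:(nra)).
  destruct (HfSb t Ht). fold h in H1. apply Rmult_le_pos; [|auto]. nra.
Qed.

Lemma Psi_le z s : 0 <= z -> 0 < s -> Psi z s <= Wf s.
Proof.
  intros Hz Hs. unfold Psi, Wf. pose proof (pw_pos s mu).
  pose proof (kh_pos k mu m xb (z * s) Hv ltac:(nra)). fold h in H1.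
  specialize (Hhb (z * s) ltac:(nra)). fold h in Hhb. destruct (HfSb s Hs).
  apply Rle_trans with (Rpower s mu * H * (A * mj a be s)).
  { apply Rmult_le_compat; try nra. }
  unfold mj. replace (mu + a - 1) with (mu + (a - 1)) by ring. rewrite pw_plus. right; ring.
Qed.

Lemma Wf_IOK : IOK Wf 0 p_infty.
Proof. intros u v Hu Huv _. apply ex_RInt_cont_R; auto. intros; unfold Wf. apply cR_mult. apply cR_const. apply mj_cont; lra. Qed.

Lemma Wf_isI : exists Lw, isI Wf 0 p_infty Lw.
Proof.
  destruct (mj_isI (mu + a) be ltac:(lra) Hbe) as [l [Hl _]]. exists (H * A * l).
  apply (isI_scal (mj (mu + a) be) 0 p_infty l (H * A)). apply mj_IOK. auto.
Qed.

Lemma Wf_BND : exists Bw, forall u v, 0 < u -> u <= v -> RInt Wf u v <= Bw.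
Proof.
  destruct (mj_BND (mu + a) be ltac:(lra) Hbe) as [B HB]. exists (H * A * B).
  intros u v Hu Huv. unfold Wf. rewrite RInt_scal_R by (apply mj_IOK; simpl; auto).
  apply Rmult_le_compat_l. nra. auto.
Qed.

Definition J z := imp_int_0inf (Psi z).

Lemma J_isI z : 0 <= z -> isI (Psi z) 0 p_infty (J z) /\ 0 <= J z /\
  (forall u v, 0 < u -> u <= v -> RInt (Psi z) u v <= J z).
Proof.
  intros Hz. destruct Wf_BND as [Bw HBw].
  destruct (sup_exists (Psi z) 0 p_infty Bw) as [l [Hl [_ [Hl0 Hsup]]]].
  { simpl; auto. } { apply Psi_IOK. } { apply Psi_NN; auto. }
  { intros u v Hu Huv _. eapply Rle_trans; [|apply (HBw u v); auto].
    apply RInt_le; auto. apply Psi_IOK; simpl; auto. apply Wf_IOK; simpl; auto.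
    intros; apply Psi_le; auto; lra. }
  assert (E : J z = l) by (unfold J; apply inf_value; auto; apply Psi_IOK).
  rewrite E. split; auto. split; auto. intros; apply Hsup; simpl; auto.
Qed.

Lemma J_cont z0 : 0 <= z0 -> forall eps, 0 < eps -> exists del, 0 < del /\
  forall z, 0 <= z -> Rabs (z - z0) < del -> Rabs (J z - J z0) < eps.
Proof.
  intros Hz0 eps Heps. destruct Wf_isI as [Lw HLw].
  set (Z := fun z => 0 <= z < z0 + 1).
  destruct (dct Psi Wf 0 p_infty Z z0 J Lw) with (eps := eps) as [del [Hdel Hc]]; auto.
  - unfold Z; lra.
  - intros; apply Psi_IOK.
  - intros z Hz; apply Psi_NN; unfold Z in Hz; lra.
  - apply Wf_IOK.
  - intros z t Hz Ht _. apply Psi_le; unfold Z in Hz; lra.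
  - intros z Hz; apply J_isI; unfold Z in Hz; lra.
  - intros p q Hp Hpq _ e He.
    set (Mt := (Rpower p mu + Rpower q mu) * (A * (Rpower p (a - 1) + Rpower q (a - 1)))).
    assert (HMt : 0 < Mt).
    { unfold Mt. pose proof (pw_pos p mu). pose proof (pw_pos q mu). pose proof (pw_pos p (a-1)).
      pose proof (pw_pos q (a-1)). apply Rmult_lt_0_compat; [lra|]. apply Rmult_lt_0_compat; lra. }
    set (E := e / (Mt + 1)). assert (HE : 0 < E) by (unfold E; apply Rdiv_lt_0_compat; lra).
    assert (HEM : Mt * E <= e).
    { unfold E. replace (Mt * (e / (Mt + 1))) with (e * (Mt / (Mt + 1))) by (field; lra).
      assert (Mt / (Mt + 1) <= 1). { apply Rmult_le_reg_r with (Mt + 1); [lra|]. unfold Rdiv.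
        rewrite Rmult_assoc, Rinv_l by lra. lra. }
      assert (0 <= Mt / (Mt + 1)) by (apply Rmult_le_pos; [lra| left; apply Rinv_0_lt_compat; lra]). nra. }
    destruct (unif_cont_gen h 0 ((z0 + 1) * q)) with (eps := E) as [dh [Hdh Hh]]; auto.
    { intros; apply kh_cont; auto. }
    exists (dh / (q + 1)). split. apply Rdiv_lt_0_compat; lra.
    intros z Hz Hzd t Ht. unfold Z in Hz.
    assert (Hzt : Rabs (z * t - z0 * t) < dh).
    { replace (z * t - z0 * t) with ((z - z0) * t) by ring. rewrite Rabs_mult, (Rabs_pos_eq t) by lra.
      pose proof (Rabs_pos (z - z0)).
      apply Rle_lt_trans with (Rabs (z - z0) * (q + 1)). apply Rmult_le_compat_l; lra.
      apply Rmult_lt_reg_r with (/ (q + 1)). apply Rinv_0_lt_compat; lra.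
      rewrite Rmult_assoc, Rinv_r, Rmult_1_r by lra. auto. }
    assert (Hr1 : 0 <= z * t <= (z0 + 1) * q) by (split; [nra|]; apply Rmult_le_compat; lra).
    assert (Hr0 : 0 <= z0 * t <= (z0 + 1) * q) by (split; [nra|]; apply Rmult_le_compat; lra).
    specialize (Hh _ _ Hr1 Hr0 Hzt).
    unfold Psi. replace (Rpower t mu * h (z * t) * fS t - Rpower t mu * h (z0 * t) * fS t)
      with ((Rpower t mu * fS t) * (h (z * t) - h (z0 * t))) by ring.
    rewrite Rabs_mult. pose proof (pw_pos t mu).
    pose proof (f_on_compact fS a A be p q Hp HA Hbe HfSb t Ht) as Bf.
    pose proof (pw_between t p q mu ltac:(lra) ltac:(lra)).
    rewrite Rabs_pos_eq by nra.
    apply Rle_trans with (Mt * E); auto.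
    pose proof (Rabs_pos (h (z * t) - h (z0 * t))).
    apply Rmult_le_compat; [nra | lra | | lra]. unfold Mt. apply Rmult_le_compat; lra.
  - exists (Rmin del 1). split. apply Rmin_glb_lt; lra.
    intros z Hz Hzd. apply Hc. unfold Z. pose proof (Rmin_r del 1). apply Rabs_def2 in Hzd. lra.
    eapply Rlt_le_trans; [exact Hzd| apply Rmin_l].
Qed.

Lemma pw_S s : 0 < s -> s * Rpower s (mu - 1) = Rpower s mu.
Proof. intros Hs. replace mu with (1 + (mu - 1)) at 2 by ring. rewrite pw_plus, pw_one; auto. Qed.

Lemma fgam_eq z : 0 < z -> ratio_pdf (ksm_pdf k mu m xb) fS z = Rpower z (mu - 1) * J z.
Proof.
  intros Hz. unfold ratio_pdf. destruct (Rlt_dec 0 z); [|lra].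
  assert (Heq : forall s, 0 < s -> Rpower z (mu - 1) * Psi z s = s * ksm_pdf k mu m xb (z * s) * fS s).
  { intros s Hs. rewrite ksm_eq by nra. unfold Psi. rewrite pw_mult by lra. rewrite <- (pw_S s Hs).
    fold h. ring. }
  destruct (J_isI z ltac:(lra)) as [HJ _].
  apply inf_value.
  - apply (IOK_ext (fun s => Rpower z (mu - 1) * Psi z s)). intros; apply Heq; auto.
    intros u v Hu Huv _. apply ex_RInt_cont_R; auto. intros; apply cR_mult. apply cR_const. apply Psi_cont; lra.
  - apply (isI_ext (fun s => Rpower z (mu - 1) * Psi z s)). intros; apply Heq; auto.
    apply isI_scal; auto. apply Psi_IOK.
Qed.

Lemma J0_pos : 0 < J 0.
Proof.
  destruct (J_isI 0 ltac:(lra)) as [_ [_ Hsup]].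
  destruct (pos_somewhere (Psi 0) 0 p_infty s0 (Psi_IOK 0)) as [u [v [Hu [Huv [_ Hp]]]]].
  { auto. } { simpl; auto. } { apply Psi_cont; auto. }
  { unfold Psi. apply Rmult_lt_0_compat; auto. apply Rmult_lt_0_compat. apply pw_pos.
    apply kh_pos; auto; lra. }
  specialize (Hsup u v Hu ltac:(lra)). lra.
Qed.

Lemma J_contpos t : 0 < t -> continuous J t.
Proof.
  intros Ht. apply eps_cont. intros eps Heps. destruct (J_cont t ltac:(lra) eps Heps) as [del [Hd Hc]].
  exists (Rmin del t). split. apply Rmin_glb_lt; lra. intros y Hy. apply Hc.
  pose proof (Rmin_r del t). apply Rabs_def2 in Hy. lra.
  eapply Rlt_le_trans; [exact Hy| apply Rmin_l].
Qed.

Lemma fgam_cont t : 0 < t -> continuous (ratio_pdf (ksm_pdf k mu m xb) fS) t.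
Proof.
  intros Ht. apply (cont_loc_ext _ (fun y => Rpower y (mu - 1) * J y) t t Ht).
  intros y Hy. apply Rabs_def2 in Hy. apply fgam_eq. lra.
  apply cR_mult. apply cR_pw; auto. apply J_contpos; auto.
Qed.

Lemma final_arith mu' J' X J0 e eps : 0 < mu' -> 0 < J0 -> 0 < eps -> 0 < e -> e <= J0 / 2 ->
  e <= eps * J0 / (8 * mu') -> Rabs (J' - J0) < e -> J0 - e <= X <= J0 + e ->
  Rabs (mu' * J' / X - mu') < eps.
Proof.
  intros Hmu' HJ0 Heps He He1 He2 HJ HX.
  assert (HX0 : 0 < X) by lra.
  replace (mu' * J' / X - mu') with (mu' * (J' - X) * / X) by (field; lra).
  rewrite !Rabs_mult, (Rabs_pos_eq mu'), (Rabs_pos_eq (/ X)) by (try left; try apply Rinv_0_lt_compat; lra).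
  apply Rabs_def2 in HJ.
  assert (HJX : Rabs (J' - X) < 2 * e) by (apply Rabs_def1; lra).
  apply Rmult_lt_reg_r with X; auto. rewrite Rmult_assoc, Rinv_l, Rmult_1_r by lra.
  assert (mu' * (2 * e) <= eps * J0 / 4).
  { apply Rmult_le_reg_r with (/ mu'). apply Rinv_0_lt_compat; lra.
    replace (mu' * (2 * e) * / mu') with (2 * e) by (field; lra).
    replace (eps * J0 / 4 * / mu') with (2 * (eps * J0 / (8 * mu'))) by (field; lra). lra. }
  pose proof (Rabs_pos (J' - X)).
  assert (mu' * Rabs (J' - X) < mu' * (2 * e)) by (apply Rmult_lt_compat_l; lra).
  nra.
Qed.

Lemma main_limit : forall eps, 0 < eps -> exists d, 0 < d /\ forall z, 0 < z < d ->
  Rabs (z * ratio_pdf (ksm_pdf k mu m xb) fS z /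
        cdf_pos (ratio_pdf (ksm_pdf k mu m xb) fS) z - mu) < eps.
Proof.
  intros eps Heps. set (fg := ratio_pdf (ksm_pdf k mu m xb) fS).
  set (J0 := J 0). assert (HJ0 : 0 < J0) by apply J0_pos.
  set (e := Rmin (J0 / 2) (eps * J0 / (8 * mu))).
  assert (He : 0 < e).
  { unfold e. apply Rmin_glb_lt. lra. apply Rdiv_lt_0_compat; [nra| lra]. }
  assert (He1 : e <= J0 / 2) by apply Rmin_l.
  assert (He2 : e <= eps * J0 / (8 * mu)) by apply Rmin_r.
  destruct (J_cont 0 ltac:(lra) e He) as [del [Hdel Hc]].
  exists del. split; auto. intros z Hz.
  assert (HJt : forall t, 0 < t <= z -> Rabs (J t - J0) < e).
  { intros t Ht. apply Hc. lra. rewrite Rminus_0_r, Rabs_pos_eq; lra. }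
  assert (Hfg : forall t, 0 < t -> fg t = Rpower t (mu - 1) * J t) by (intros; apply fgam_eq; auto).
  assert (HIOK : IOK fg 0 (Finite z)).
  { intros u v Hu Huv Hv'. apply ex_RInt_cont_R; auto. intros; apply fgam_cont; simpl in Hv'; lra. }
  assert (HNN : NNg fg 0 (Finite z)).
  { intros t Ht _. rewrite Hfg by auto. destruct (J_isI t ltac:(lra)) as [_ [HJ _]].
    pose proof (pw_pos t (mu - 1)). nra. }
  set (P := Rpower z mu). assert (HP : 0 < P) by apply pw_pos.
  assert (HIOKp : IOK (fun t => Rpower t (mu - 1)) 0 (Finite z)).
  { intros u v Hu Huv _. apply ex_RInt_pw; lra. }
  destruct (sup_exists fg 0 (Finite z) ((J0 + e) * (P / mu))) as [l [Hl [Hlb _]]].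
  { simpl; lra. } { auto. } { auto. }
  { intros u v Hu Huv Hv'. simpl in Hv'.
    apply Rle_trans with (RInt (fun t => (J0 + e) * Rpower t (mu - 1)) u v).
    - apply RInt_le; [lra | apply HIOK; simpl; auto; lra | | ].
      apply ex_RInt_cont_R; auto. intros; apply cR_mult. apply cR_const. apply cR_pw; lra.
      intros x Hx. rewrite Hfg by lra. specialize (HJt x ltac:(lra)). apply Rabs_def2 in HJt.
      pose proof (pw_pos x (mu - 1)). nra.
    - rewrite RInt_scal_R by (apply ex_RInt_pw; lra). rewrite RInt_pw by lra.
      apply Rmult_le_compat_l; [lra|]. unfold P. pose proof (pw_pos u mu).
      pose proof (pw_le_base v z mu ltac:(lra) ltac:(lra)).
      unfold Rdiv. apply Rmult_le_compat_r. left; apply Rinv_0_lt_compat; lra. lra. }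
  assert (Hlow : (J0 - e) * (P / mu) <= l).
  { apply (isI_le (fun t => (J0 - e) * Rpower t (mu - 1)) fg 0 (Finite z)).
    - intros u v Hu Huv _. apply ex_RInt_cont_R; auto. intros; apply cR_mult. apply cR_const. apply cR_pw; lra.
    - auto.
    - intros t Ht Htz. simpl in Htz. rewrite Hfg by auto. specialize (HJt t ltac:(lra)).
      apply Rabs_def2 in HJt. pose proof (pw_pos t (mu - 1)). nra.
    - apply isI_scal. auto. apply isI_pw; lra.
    - auto. }
  assert (HF : cdf_pos fg z = l) by (unfold cdf_pos; apply ab_value; auto; lra).
  fold fg. rewrite HF, Hfg by lra.
  assert (Hl0 : 0 < l).
  { eapply Rlt_le_trans; [|exact Hlow]. apply Rmult_lt_0_compat. lra. apply Rdiv_lt_0_compat; lra. }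
  replace (z * (Rpower z (mu - 1) * J z) / l) with (mu * J z / (l * mu / P)).
  2:{ unfold P. rewrite <- (pw_S z) by lra. field. repeat split; try lra.
      pose proof (pw_pos z (mu - 1)). nra. }
  apply (final_arith mu (J z) (l * mu / P) J0 e eps); auto.
  - apply HJt; lra.
  - split.
    + apply Rmult_le_reg_r with (P / mu). apply Rdiv_lt_0_compat; lra.
      replace (l * mu / P * (P / mu)) with l by (field; lra). auto.
    + apply Rmult_le_reg_r with (P / mu). apply Rdiv_lt_0_compat; lra.
      replace (l * mu / P * (P / mu)) with l by (field; lra). auto.
Qed.

End Ratio.

End M_P9.
Import M_P9.


Lemma sum_Good (p : nat -> R -> R) n : (forall j, (j <= n)%nat -> Good (p j)) -> Good (sum_pdf p n).
Proof.
  induction n; intros H; simpl.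
  - apply H; lia.
  - apply conv_Good. apply H; lia. apply IHn. intros; apply H; lia.
Qed.

Theorem mainTheorem2 (N : nat) (k mu m xb : R) (kj muj mj xbj : nat -> R) :
  (1 <= N)%nat ->
  0 <= k -> 0 < mu -> 0 < m -> 0 < xb ->
  (forall j, (j < N)%nat -> 0 <= kj j /\ 0 < muj j /\ 0 < mj j /\ 0 < xbj j) ->
  let f_gamma :=
    ratio_pdf (ksm_pdf k mu m xb)
              (sum_pdf (fun j => ksm_pdf (kj j) (muj j) (mj j) (xbj j)) (N - 1)) in
  let F_gamma := cdf_pos f_gamma in
  forall eps, 0 < eps -> exists d, 0 < d /\
    forall z, 0 < z < d -> Rabs (z * f_gamma z / F_gamma z - mu) < eps.
Proof.
  intros HN Hk Hmu Hm Hxb Hj f_gamma F_gamma eps Heps.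
  assert (Hv : valid k mu m xb) by (repeat split; auto).
  assert (HG : Good (sum_pdf (fun j => ksm_pdf (kj j) (muj j) (mj j) (xbj j)) (N - 1))).
  { apply sum_Good. intros j Hjn. apply ksm_Good. destruct (Hj j ltac:(lia)) as [? [? [? ?]]].
    repeat split; auto. }
  destruct HG as [a [A [be [Ha [HA [Hbe [Hc [Hb [s0 [Hs0 Hp]]]]]]]]]].
  destruct (kh_bound k mu m xb Hv) as [H [be' [HH [Hbe' Hkb]]]].
  assert (Hhb : forall x, 0 <= x -> kh k mu m xb x <= H).
  { intros x Hx. eapply Rle_trans. apply Hkb; auto.
    assert (exp (- (be' * x)) <= 1) by (rewrite <- exp_0; apply exp_le_exp; nra). nra. }
  unfold F_gamma, f_gamma.
  exact (main_limit k mu m xb _ a A be H s0 Hv Ha HA Hbe HH Hc Hb Hs0 Hp Hhb eps Heps).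
Qed.
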